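(* Let $f$ be a real-valued function on $[0,1]^2$ which is $1$-periodic in each variable, belongs to $C^2([0,1]^2)$, and is not identically zero. For an integer $N\ge 2$, define $g:\mathbb{Z}_N^2\to\mathbb{R}$ by $g(x_1,x_2)=f(x_1/N,x_2/N)$. Assume that $$N\|f\|_{L^2([0,1]^2)}^2\ge 8\|f\|_{C^2([0,1]^2)}^2.$$ Define $\widehat g(m)=\frac{1}{N}\sum_{x\in\mathbb{Z}_N^2}\chi(-x\cdot m)g(x)$ for $m\in\mathbb{Z}_N^2$, where $\chi(t)=e^{2\pi i t/N}$, and $FR(g)=\|\widehat g\|_1/\|\widehat g\|_2$. Then $$FR(g)\le 2\frac{\left|\int_{[0,1]^2} f(x)\,dx\right|}{\|f\|_{L^2([0,1]^2)}}+16\pi^2\frac{\|f\|_{C^2([0,1]^2)}}{\|f\|_{L^2([0,1]^2)}}\log N+\frac{8\pi^2}{\|f\|_{L^2([0,1]^2)}}\frac{\|f\|_{C^2([0,1]^2)}}{N}.$$ In particular, if $f\ge 0$ and $\mu=\int_{[0,1]^2}f(x)\,dx>0$, then $$FR(g)\le 2+16\pi^2\frac{\|f\|_{C^2([0,1]^2)}}{\mu}\log N+\frac{8\pi^2}{\mu}\frac{\|f\|_{C^2([0,1]^2)}}{N}.$$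
   Context: $\|f\|_{C^2([0,1]^2)}$ denotes the standard $C^2$ norm (supremum over $[0,1]^2$ of $|\partial^\alpha f|$ over all multi-indices $|\alpha|\le 2$); $\log$ is the natural logarithm; the $\ell^1$ and $\ell^2$ norms of $\widehat g$ are over $m\in\mathbb{Z}_N^2$. *)

(* Defs.v *)
From Stdlib Require Import Reals.
From Coquelicot Require Import Coquelicot.
Open Scope R_scope.

Definition D1 (f : R -> R -> R) (x y : R) : R := Derive (fun t => f t y) x.
Definition D2 (f : R -> R -> R) (x y : R) : R := Derive (fun t => f x t) y.

Definition cont2 (h : R -> R -> R) : Prop :=
  forall p : R * R, continuous (fun q : R * R => h (fst q) (snd q)) p.

(** f is C^2 on R^2 (hence, being 1-periodic, C^2 on the torus [0,1]^2):
    all partial derivatives of order <= 2 exist everywhere and are continuous. *)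
Definition C2 (f : R -> R -> R) : Prop :=
  (forall x y, ex_derive (fun t => f t y) x) /\
  (forall x y, ex_derive (fun t => f x t) y) /\
  (forall x y, ex_derive (fun t => D1 f t y) x) /\
  (forall x y, ex_derive (fun t => D1 f x t) y) /\
  (forall x y, ex_derive (fun t => D2 f t y) x) /\
  (forall x y, ex_derive (fun t => D2 f x t) y) /\
  cont2 f /\ cont2 (D1 f) /\ cont2 (D2 f) /\
  cont2 (D1 (D1 f)) /\ cont2 (D2 (D1 f)) /\
  cont2 (D1 (D2 f)) /\ cont2 (D2 (D2 f)).

Definition periodic1 (f : R -> R -> R) : Prop :=
  forall x y, f (x + 1) y = f x y /\ f x (y + 1) = f x y.

Definition C2norm (f : R -> R -> R) : R :=
  real (Lub_Rbar (fun r => exists x y, 0 <= x <= 1 /\ 0 <= y <= 1 /\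
    (r = Rabs (f x y) \/ r = Rabs (D1 f x y) \/ r = Rabs (D2 f x y) \/
     r = Rabs (D1 (D1 f) x y) \/ r = Rabs (D2 (D1 f) x y) \/
     r = Rabs (D1 (D2 f) x y) \/ r = Rabs (D2 (D2 f) x y)))).

Definition int2 (h : R -> R -> R) : R :=
  RInt (fun x => RInt (fun y => h x y) 0 1) 0 1.

Definition L2norm (f : R -> R -> R) : R := sqrt (int2 (fun x y => (f x y) ^ 2)).

Definition chi (N : nat) (t : R) : C :=
  (cos (2 * PI * t / INR N), sin (2 * PI * t / INR N)).

(** Sum over Z_N (representatives 0..N-1). *)
Definition sumZN {G : AbelianMonoid} (N : nat) (F : nat -> G) : G :=
  sum_n F (N - 1)%nat.

Definition gN (N : nat) (f : R -> R -> R) (x1 x2 : nat) : R :=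
  f (INR x1 / INR N) (INR x2 / INR N).

Definition ghat (N : nat) (f : R -> R -> R) (m1 m2 : nat) : C :=
  Cmult (RtoC (/ INR N))
    (sumZN N (fun x1 => sumZN N (fun x2 =>
       Cmult (chi N (- (INR x1 * INR m1 + INR x2 * INR m2)))
             (RtoC (gN N f x1 x2))))).

Definition ghat_l1 (N : nat) (f : R -> R -> R) : R :=
  sumZN N (fun m1 => sumZN N (fun m2 => Cmod (ghat N f m1 m2))).

Definition ghat_l2 (N : nat) (f : R -> R -> R) : R :=
  sqrt (sumZN N (fun m1 => sumZN N (fun m2 => (Cmod (ghat N f m1 m2)) ^ 2))).

Definition FR (N : nat) (f : R -> R -> R) : R := ghat_l1 N f / ghat_l2 N f.

(* Main.v *)
Require Import Defs.
From Stdlib Require Import Reals.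
From Coquelicot Require Import Coquelicot.
Open Scope R_scope.
From Stdlib Require Import Lra Lia ClassicalEpsilon Classical.

Ltac Req := match goal with |- @eq _ ?a ?b => change (@eq R a b) end.

Lemma sR_S (a : nat -> R) n : sum_n a (S n) = sum_n a n + a (S n).
Proof. rewrite sum_Sn. reflexivity. Qed.
Lemma sR_O (a : nat -> R) : sum_n a 0 = a 0%nat.
Proof. apply sum_O. Qed.

Lemma sR_le (a b : nat -> R) n : (forall k, (k <= n)%nat -> a k <= b k) -> sum_n a n <= sum_n b n.
Proof. intros H. induction n. rewrite !sR_O. apply H; lia. rewrite !sR_S.
  assert (a (S n) <= b (S n)) by (apply H; lia).
  assert (sum_n a n <= sum_n b n) by (apply IHn; intros; apply H; lia). lra. Qed.

Lemma sR_ext (a b : nat -> R) n : (forall k, (k <= n)%nat -> a k = b k) -> sum_n a n = sum_n b n.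
Proof. intros H. apply sum_n_ext_loc. auto. Qed.

Lemma sR_plus (a b : nat -> R) n : sum_n (fun k => a k + b k) n = sum_n a n + sum_n b n.
Proof. apply (sum_n_plus a b n). Qed.

Lemma sR_scal (c : R) (a : nat -> R) n : sum_n (fun k => c * a k) n = c * sum_n a n.
Proof. apply (sum_n_mult_l c a n). Qed.

Lemma sR_scalr (c : R) (a : nat -> R) n : sum_n (fun k => a k * c) n = sum_n a n * c.
Proof. apply (sum_n_mult_r c a n). Qed.

Lemma sR_opp (a : nat -> R) n : sum_n (fun k => - a k) n = - sum_n a n.
Proof. rewrite <- (Rmult_1_l (sum_n a n)). rewrite Ropp_mult_distr_l.
  rewrite <- sR_scal. apply sR_ext. intros; ring. Qed.

Lemma sR_minus (a b : nat -> R) n : sum_n (fun k => a k - b k) n = sum_n a n - sum_n b n.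
Proof. unfold Rminus. rewrite sR_plus, sR_opp. reflexivity. Qed.

Lemma sR_const (c : R) n : sum_n (fun _ => c) n = INR (S n) * c.
Proof. apply sum_n_const. Qed.

Lemma sR_abs (a : nat -> R) n : Rabs (sum_n a n) <= sum_n (fun k => Rabs (a k)) n.
Proof. induction n. rewrite !sR_O. lra. rewrite !sR_S.
  eapply Rle_trans. apply Rabs_triang. lra. Qed.

Lemma sR_nonneg (a : nat -> R) n : (forall k, (k <= n)%nat -> 0 <= a k) -> 0 <= sum_n a n.
Proof. intros H. rewrite <- (Rmult_0_r (INR (S n))). rewrite <- sR_const. apply sR_le. auto. Qed.

Lemma sR_bound (a : nat -> R) (c : R) n : (forall k, (k <= n)%nat -> Rabs (a k) <= c) ->
  Rabs (sum_n a n) <= INR (S n) * c.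
Proof. intros H. eapply Rle_trans. apply sR_abs. rewrite <- sR_const. apply sR_le. auto. Qed.

Lemma sR_shift (F : nat -> R) n : sum_n (fun x => F (S x)) n + F 0%nat = sum_n F n + F (S n).
Proof. induction n. rewrite !sR_O. ring. rewrite !sR_S. lra. Qed.

Lemma sR_Sl (G : nat -> R) n : sum_n G (S n) = G 0%nat + sum_n (fun x => G (S x)) n.
Proof. pose proof (sR_shift G n). rewrite sR_S. lra. Qed.

Lemma sR_rev (F : nat -> R) n : sum_n (fun x => F (n - x)%nat) n = sum_n F n.
Proof. induction n as [|n IH]. rewrite !sR_O. reflexivity.
  rewrite sR_Sl. simpl (S n - 0)%nat. 
  rewrite (sR_ext (fun x => F (S n - S x)%nat) (fun x => F (n - x)%nat)) by (intros; reflexivity).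
  rewrite IH, sR_S. lra. Qed.

Lemma lip_seg (phi dphi : R -> R) (a b K : R) :
  (forall x, Rmin a b <= x <= Rmax a b -> is_derive phi x (dphi x)) ->
  (forall x, Rmin a b <= x <= Rmax a b -> Rabs (dphi x) <= K) ->
  Rabs (phi b - phi a) <= K * Rabs (b - a).
Proof.
  intros Hd Hb.
  destruct (MVT_gen phi a b dphi) as [c [Hc Heq]].
  - intros x Hx. apply Hd. lra.
  - intros x Hx. apply continuity_pt_filterlim. apply (@ex_derive_continuous R_AbsRing R_NormedModule).
    eexists. apply Hd. exact Hx.
  - rewrite Heq, Rabs_mult. apply Rmult_le_compat_r. apply Rabs_pos. apply Hb. exact Hc.
Qed.

Lemma lip_glob (phi dphi : R -> R) (K : R) :
  (forall x, is_derive phi x (dphi x)) ->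
  (forall x, Rabs (dphi x) <= K) ->
  forall a b, Rabs (phi b - phi a) <= K * Rabs (b - a).
Proof. intros; apply lip_seg with dphi; auto. Qed.

Lemma is_derive_shift (phi dphi : R -> R) t :
  (forall x, is_derive phi x (dphi x)) ->
  forall s, is_derive (fun s => phi (t + s)) s (dphi (t + s)).
Proof. intros H s.
  apply is_derive_ext with (fun s => phi (t + s)). reflexivity.
  replace (dphi (t + s)) with (1 * dphi (t+s)) by ring.
  apply (is_derive_comp phi (fun s => t + s)). apply H.
  auto_derive. auto. ring.
Qed.

Lemma is_derive_shiftm (phi dphi : R -> R) t :
  (forall x, is_derive phi x (dphi x)) ->
  forall s, is_derive (fun s => phi (t - s)) s (- dphi (t - s)).
Proof. intros H s.
  replace (- dphi (t - s)) with ((-1) * dphi (t-s)) by ring.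
  apply (is_derive_comp phi (fun s => t - s)). apply H.
  auto_derive. auto. ring.
Qed.

Lemma second_diff (phi d1 d2 : R -> R) (C : R) :
  (forall x, is_derive phi x (d1 x)) ->
  (forall x, is_derive d1 x (d2 x)) ->
  (forall x, Rabs (d2 x) <= C) ->
  forall t h, Rabs (phi (t + h) + phi (t - h) - 2 * phi t) <= 2 * C * h ^ 2.
Proof.
  intros H1 H2 HC t h.
  pose (psi := fun s => phi (t + s) + phi (t - s)).
  pose (dpsi := fun s => d1 (t + s) - d1 (t - s)).
  assert (Hl := lip_glob d1 d2 C H2 HC).
  assert (HC0 : 0 <= C) by (specialize (HC 0); pose proof (Rabs_pos (d2 0)); lra).
  assert (Hp : Rabs (psi h - psi 0) <= (2 * C * Rabs h) * Rabs (h - 0)).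
  { apply lip_seg with dpsi.
    - intros x _. unfold psi, dpsi. unfold Rminus at 2. apply @is_derive_plus.
      apply is_derive_shift; auto. apply is_derive_shiftm; auto.
    - intros x Hx. unfold dpsi. 
      specialize (Hl (t - x) (t + x)).
      replace (t + x - (t - x)) with (2 * x) in Hl by ring.
      rewrite Rabs_mult in Hl. rewrite (Rabs_right 2) in Hl by lra.
      assert (Rabs x <= Rabs h).
      { unfold Rmin, Rmax in Hx. destruct (Rle_dec 0 h); unfold Rabs; destruct (Rcase_abs x), (Rcase_abs h); lra. }
      apply Rle_trans with (C * (2 * Rabs x)). exact Hl.
      nra. }
  unfold psi in Hp. replace (t + 0) with t in Hp by ring. replace (t - 0) with t in Hp by ring.
  replace (h - 0) with h in Hp by ring.
  replace (phi (t + h) + phi (t - h) - 2 * phi t) with (phi (t + h) + phi (t - h) - (phi t + phi t)) by ring.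
  eapply Rle_trans. exact Hp. rewrite <- (pow2_abs h). right. ring.
Qed.

Definition lipf (phi : R -> R) (K : R) := forall s t, Rabs (phi s - phi t) <= K * Rabs (s - t).

Lemma lip_cont phi K : 0 <= K -> lipf phi K -> forall z, continuous phi z.
Proof.
  intros HK H z. apply continuity_pt_filterlim.
  intros eps Heps. exists (eps / (K + 1)). split.
  apply Rdiv_lt_0_compat; lra.
  intros x [_ Hx]. simpl in *. unfold R_dist in *.
  eapply Rle_lt_trans. apply H.
  apply Rle_lt_trans with (K * (eps / (K+1))). apply Rmult_le_compat_l; lra.
  assert (0 < eps / (K + 1)) by (apply Rdiv_lt_0_compat; lra).
  apply Rlt_le_trans with ((K + 1) * (eps / (K + 1))). nra. right. field. lra.
Qed.

Lemma lip_exRInt phi K : 0 <= K -> lipf phi K -> forall a b, ex_RInt phi a b.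
Proof. intros. apply (@ex_RInt_continuous R_CompleteNormedModule). intros. eapply lip_cont; eauto. Qed.

Lemma cell_err phi K a b : 0 <= K -> lipf phi K -> a <= b ->
  Rabs (RInt phi a b - (b - a) * phi a) <= K * (b - a) ^ 2.
Proof.
  intros HK H Hab.
  assert (E : RInt phi a b - (b - a) * phi a = RInt (fun x => phi x - phi a) a b).
  { rewrite (RInt_minus phi (fun _ => phi a)). rewrite RInt_const. reflexivity.
    eapply lip_exRInt; eauto. apply ex_RInt_const. }
  rewrite E. replace (K * (b - a) ^ 2) with ((b - a) * (K * (b - a))) by ring.
  apply abs_RInt_le_const. exact Hab.
  apply (ex_RInt_minus phi (fun _ => phi a)). eapply lip_exRInt; eauto. apply ex_RInt_const.
  intros t Ht. eapply Rle_trans. apply H. apply Rmult_le_compat_l. lra.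
  rewrite Rabs_right; lra.
Qed.

Lemma riem1 phi K n : 0 <= K -> lipf phi K -> (0 < n)%nat ->
  Rabs (RInt phi 0 1 - / INR n * sum_n (fun i => phi (INR i / INR n)) (n - 1)) <= K / INR n.
Proof.
  intros HK H Hn.
  assert (Hn' : 0 < INR n) by (apply lt_0_INR; lia).
  assert (Hk : forall k, Rabs (RInt phi 0 (INR (S k) / INR n) - / INR n * sum_n (fun i => phi (INR i / INR n)) k) <= INR (S k) * (K / INR n ^ 2)).
  { induction k.
    - rewrite sR_O. 
      pose proof (cell_err phi K 0 (INR 1 / INR n) HK H) as C.
      replace (INR 0 / INR n) with 0 by (simpl; field; lra).
      replace (/ INR n * phi 0) with ((INR 1 / INR n - 0) * phi 0) by (simpl; field; lra).
      eapply Rle_trans. apply C. simpl. apply Rlt_le, Rdiv_lt_0_compat; lra.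
      right. simpl. field. lra.
    - rewrite sR_S.
      rewrite <- (RInt_Chasles phi 0 (INR (S k) / INR n) (INR (S (S k)) / INR n)) by (eapply lip_exRInt; eauto).
      pose proof (cell_err phi K (INR (S k) / INR n) (INR (S (S k)) / INR n) HK H) as C.
      assert (L : INR (S k) / INR n <= INR (S (S k)) / INR n).
      { apply Rmult_le_compat_r. apply Rlt_le, Rinv_0_lt_compat; lra. apply le_INR; lia. }
      specialize (C L).
      replace (INR (S (S k)) / INR n - INR (S k) / INR n) with (/ INR n) in C by (rewrite !S_INR; field; lra).
      change plus with Rplus. 
      replace (RInt phi 0 (INR (S k) / INR n) + RInt phi (INR (S k) / INR n) (INR (S (S k)) / INR n) -
        / INR n * (sum_n (fun i : nat => phi (INR i / INR n)) k + phi (INR (S k) / INR n)))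
      with ((RInt phi 0 (INR (S k) / INR n) - / INR n * sum_n (fun i : nat => phi (INR i / INR n)) k)
            + (RInt phi (INR (S k) / INR n) (INR (S (S k)) / INR n) - / INR n * phi (INR (S k) / INR n))) by ring.
      eapply Rle_trans. apply Rabs_triang.
      replace (INR (S (S k)) * (K / INR n ^ 2)) with (INR (S k) * (K / INR n ^ 2) + K * (/ INR n) ^ 2)
        by (rewrite (S_INR (S k)); field; lra).
      apply Rplus_le_compat; auto. }
  specialize (Hk (n - 1)%nat). replace (S (n - 1)) with n in Hk by lia.
  replace (INR n / INR n) with 1 in Hk by (field; lra).
  eapply Rle_trans. apply Hk. right. field. lra.
Qed.

Definition int2' (h : R -> R -> R) : R :=
  RInt (fun x => RInt (fun y => h x y) 0 1) 0 1.

Lemma riem2 h K1 K2 n : 0 <= K1 -> 0 <= K2 ->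
  (forall y, lipf (fun x => h x y) K1) -> (forall x, lipf (fun y => h x y) K2) -> (0 < n)%nat ->
  Rabs (int2' h - sum_n (fun i => sum_n (fun j => h (INR i / INR n) (INR j / INR n)) (n - 1)) (n - 1) / INR n ^ 2)
  <= (K1 + K2) / INR n.
Proof.
  intros HK1 HK2 H1 H2 Hn.
  assert (Hn' : 0 < INR n) by (apply lt_0_INR; lia).
  set (F := (fun x => RInt (fun y => h x y) 0 1) : R -> R).
  assert (LF : lipf F K1).
  { intros s t.
    assert (E: F s - F t = RInt (fun y => h s y - h t y) 0 1).
    { unfold F. symmetry. apply (RInt_minus (fun y => h s y) (fun y => h t y)); eapply lip_exRInt; eauto. }
    rewrite E.
    replace (K1 * Rabs (s - t)) with ((1 - 0) * (K1 * Rabs (s - t))) by ring.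
    apply abs_RInt_le_const. lra.
    apply (ex_RInt_minus (fun y => h s y) (fun y => h t y)); eapply lip_exRInt; eauto.
    intros y _. apply (H1 y). }
  pose proof (riem1 F K1 n HK1 LF Hn) as R1.
  assert (R2 : forall i, Rabs (F (INR i / INR n) - / INR n * sum_n (fun j => h (INR i / INR n) (INR j / INR n)) (n - 1)) <= K2 / INR n).
  { intros i. apply (riem1 (fun y => h (INR i / INR n) y) K2 n HK2 (H2 _) Hn). }
  assert (R3 : Rabs (/ INR n * sum_n (fun i => F (INR i / INR n)) (n - 1) -
     / INR n * sum_n (fun i => / INR n * sum_n (fun j => h (INR i / INR n) (INR j / INR n)) (n - 1)) (n - 1)) <= K2 / INR n).
  { rewrite <- Rmult_minus_distr_l, <- sR_minus. rewrite Rabs_mult, Rabs_right by (apply Rle_ge, Rlt_le, Rinv_0_lt_compat; lra).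
    replace (K2 / INR n) with (/ INR n * (INR (S (n - 1)) * (K2 / INR n))).
    apply Rmult_le_compat_l. apply Rlt_le, Rinv_0_lt_compat; lra.
    apply sR_bound. intros; apply R2.
    replace (S (n - 1)) with n by lia. field. lra. }
  unfold int2'. fold F.
  replace (sum_n (fun i => sum_n (fun j => h (INR i / INR n) (INR j / INR n)) (n - 1)) (n - 1) / INR n ^ 2)
    with (/ INR n * sum_n (fun i => / INR n * sum_n (fun j => h (INR i / INR n) (INR j / INR n)) (n - 1)) (n - 1)).
  2:{ rewrite sR_scal. field. lra. }
  replace ((K1 + K2) / INR n) with (K1 / INR n + K2 / INR n) by (field; lra).
  eapply Rle_trans. 2: apply Rplus_le_compat; [apply R1 | apply R3].
  eapply Rle_trans. 2: apply Rabs_triang. right. f_equal. ring.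
Qed.

Lemma cont2_eps h : cont2 h -> forall u v eps, 0 < eps -> exists del, 0 < del /\
  forall x y, Rabs (x - u) < del -> Rabs (y - v) < del -> Rabs (h x y - h u v) < eps.
Proof.
  intros H u v eps He.
  specialize (H (u, v)).
  assert (L : locally (u, v) (fun q : R * R => ball (h u v) eps (h (fst q) (snd q)))).
  { apply H. exists (mkposreal eps He). intros z Hz. exact Hz. }
  destruct L as [del Hd]. exists del. split. apply cond_pos.
  intros x y Hx Hy. specialize (Hd (x, y)). apply Hd. split; simpl; auto.
Qed.

Lemma sR_term (a : nat -> R) n i : (forall k, (k <= n)%nat -> 0 <= a k) -> (i <= n)%nat -> a i <= sum_n a n.
Proof. intros H Hi. induction n. replace i with 0%nat by lia. rewrite sR_O. lra.
  rewrite sR_S. destruct (Nat.eq_dec i (S n)). subst. 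
  assert (0 <= sum_n a n) by (apply sR_nonneg; intros; apply H; lia). lra.
  assert (a i <= sum_n a n) by (apply IHn; [intros; apply H; lia | lia]).
  assert (0 <= a (S n)) by (apply H; lia). lra. Qed.

Lemma cont2_bounded h : cont2 h -> exists M, forall x y, 0 <= x <= 1 -> 0 <= y <= 1 -> Rabs (h x y) <= M.
Proof.
  intros H.
  assert (D : forall u v, {d : posreal | forall x y, Rabs (x - u) < 2 * d -> Rabs (y - v) < 2 * d -> Rabs (h x y - h u v) < 1}).
  { intros u v. apply constructive_indefinite_description.
    destruct (cont2_eps h H u v 1 Rlt_0_1) as [del [Hd Hdel]].
    assert (Hd2 : 0 < del / 2) by lra.
    exists (mkposreal _ Hd2). simpl. intros x y Hx Hy. apply Hdel.
    replace (2 * (del / 2)) with del in Hx by field. auto.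
    replace (2 * (del / 2)) with del in Hy by field. auto. }
  set (delta := fun u v => proj1_sig (D u v)).
  destruct (compactness_value_2d 0 1 0 1 delta) as [d Hd].
  destruct (archimed_cor1 d (cond_pos d)) as [K [HK HK0]].
  assert (HK' : 0 < INR K) by (apply lt_0_INR; lia).
  exists (sum_n (fun i => sum_n (fun j => Rabs (h (INR i / INR K) (INR j / INR K))) K) K + 2).
  intros x y Hx Hy.
  apply Rnot_lt_le. intro Hc. apply (Hd x y Hx Hy). intros [u [v [Hu [Hv [Hxu [Hyv Hdu]]]]]].
  destruct (nfloor_ex (x * INR K)) as [i Hi]. nra.
  destruct (nfloor_ex (y * INR K)) as [j Hj]. nra.
  assert (HiK : (i <= K)%nat). { apply INR_le. nra. }
  assert (HjK : (j <= K)%nat). { apply INR_le. nra. }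
  assert (Hqx : Rabs (INR i / INR K - x) <= / INR K).
  { replace (INR i / INR K - x) with ((INR i - x * INR K) * / INR K) by (field; lra).
    rewrite Rabs_mult, (Rabs_right (/ INR K)) by (apply Rle_ge, Rlt_le, Rinv_0_lt_compat; lra).
    rewrite <- (Rmult_1_l (/ INR K)) at 2. apply Rmult_le_compat_r.
    apply Rlt_le, Rinv_0_lt_compat; lra. apply Rabs_le; lra. }
  assert (Hqy : Rabs (INR j / INR K - y) <= / INR K).
  { replace (INR j / INR K - y) with ((INR j - y * INR K) * / INR K) by (field; lra).
    rewrite Rabs_mult, (Rabs_right (/ INR K)) by (apply Rle_ge, Rlt_le, Rinv_0_lt_compat; lra).
    rewrite <- (Rmult_1_l (/ INR K)) at 2. apply Rmult_le_compat_r.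
    apply Rlt_le, Rinv_0_lt_compat; lra. apply Rabs_le; lra. }
  pose proof (proj2_sig (D u v)) as Huv. fold (delta u v) in Huv.
  assert (E1 : Rabs (h x y - h u v) < 1).
  { apply Huv. pose proof (cond_pos (delta u v)). lra. pose proof (cond_pos (delta u v)). lra. }
  assert (E2 : Rabs (h (INR i / INR K) (INR j / INR K) - h u v) < 1).
  { apply Huv.
    - replace (INR i / INR K - u) with ((INR i / INR K - x) + (x - u)) by ring.
      eapply Rle_lt_trans. apply Rabs_triang. lra.
    - replace (INR j / INR K - v) with ((INR j / INR K - y) + (y - v)) by ring.
      eapply Rle_lt_trans. apply Rabs_triang. lra. }
  assert (E3 : Rabs (h (INR i / INR K) (INR j / INR K)) <= sum_n (fun i => sum_n (fun j => Rabs (h (INR i / INR K) (INR j / INR K))) K) K).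
  { eapply Rle_trans. 2: apply (sR_term (fun i => sum_n (fun j => Rabs (h (INR i / INR K) (INR j / INR K))) K) K i).
    apply (sR_term (fun j => Rabs (h (INR i / INR K) (INR j / INR K))) K j). intros; apply Rabs_pos. auto.
    intros. apply sR_nonneg. intros; apply Rabs_pos. auto. }
  pose proof (Rabs_triang_inv (h x y) (h u v)).
  pose proof (Rabs_triang_inv (h u v) (h (INR i / INR K) (INR j / INR K))).
  rewrite Rabs_minus_sym in E2. lra.
Qed.

Lemma per_D1 h : periodic1 h -> periodic1 (D1 h).
Proof.
  intros H x y. unfold D1. split.
  - unfold Derive. f_equal. apply Lim_ext. intros k.
    replace (x + 1 + k) with ((x + k) + 1) by ring. rewrite (proj1 (H (x + k) y)), (proj1 (H x y)). reflexivity.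
  - apply Derive_ext. intros t. apply H.
Qed.

Lemma per_D2 h : periodic1 h -> periodic1 (D2 h).
Proof.
  intros H x y. unfold D2. split.
  - apply Derive_ext. intros t. apply H.
  - unfold Derive. f_equal. apply Lim_ext. intros k.
    replace (y + 1 + k) with ((y + k) + 1) by ring. rewrite (proj2 (H x (y + k))), (proj2 (H x y)). reflexivity.
Qed.

Lemma per_Z h : periodic1 h -> forall z x y, h (x + IZR z) y = h x y /\ h x (y + IZR z) = h x y.
Proof.
  intros H z. pattern z. apply Z.peano_ind; clear z.
  - intros x y. rewrite !Rplus_0_r; auto.
  - intros z IH x y. rewrite succ_IZR. replace (x + (IZR z + 1)) with ((x + IZR z) + 1) by ring.
    replace (y + (IZR z + 1)) with ((y + IZR z) + 1) by ring.
    rewrite (proj1 (H _ y)), (proj2 (H x _)). apply IH.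
  - intros z IH x y. unfold Z.pred. rewrite plus_IZR. 
    split.
    + rewrite <- (proj1 (H (x + (IZR z + IZR (-1))) y)). replace (x + (IZR z + IZR (-1)) + 1) with (x + IZR z) by (simpl; ring).
      apply IH.
    + rewrite <- (proj2 (H x (y + (IZR z + IZR (-1))))). replace (y + (IZR z + IZR (-1)) + 1) with (y + IZR z) by (simpl; ring).
      apply IH.
Qed.

Lemma per_reduce h : periodic1 h -> forall x y, h x y = h (frac_part x) (frac_part y).
Proof.
  intros H x y. unfold frac_part.
  rewrite <- (proj1 (per_Z h H (Int_part x) (x - IZR (Int_part x)) (y - IZR (Int_part y)))).
  rewrite <- (proj2 (per_Z h H (Int_part y) (x - IZR (Int_part x) + IZR (Int_part x)) (y - IZR (Int_part y)))).
  f_equal; ring.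
Qed.

Lemma per_bound h M : periodic1 h -> (forall x y, 0 <= x <= 1 -> 0 <= y <= 1 -> Rabs (h x y) <= M) ->
  forall x y, Rabs (h x y) <= M.
Proof.
  intros H HM x y. rewrite (per_reduce h H). pose proof (base_fp x). pose proof (base_fp y).
  apply HM; lra.
Qed.

Definition C2set (f : R -> R -> R) := (fun r => exists x y, 0 <= x <= 1 /\ 0 <= y <= 1 /\
    (r = Rabs (f x y) \/ r = Rabs (D1 f x y) \/ r = Rabs (D2 f x y) \/
     r = Rabs (D1 (D1 f) x y) \/ r = Rabs (D2 (D1 f) x y) \/
     r = Rabs (D1 (D2 f) x y) \/ r = Rabs (D2 (D2 f) x y))).

Lemma lub_fin (E : R -> Prop) M r0 : (forall r, E r -> r <= M) -> E r0 ->
  forall r, E r -> r <= real (Lub_Rbar E).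
Proof.
  intros HM H0. destruct (Lub_Rbar_correct E) as [Hub Hl].
  assert (Hu : is_ub_Rbar E (Finite M)) by (intros r Hr; simpl; apply HM; auto).
  destruct (Lub_Rbar E) as [l| |].
  - intros r Hr. apply (Hub r Hr).
  - specialize (Hl _ Hu). simpl in Hl. contradiction.
  - specialize (Hub r0 H0). simpl in Hub. contradiction.
Qed.

Lemma C2_facts f : periodic1 f -> C2 f ->
  0 <= C2norm f /\ forall x y,
  Rabs (f x y) <= C2norm f /\ Rabs (D1 f x y) <= C2norm f /\ Rabs (D2 f x y) <= C2norm f /\ Rabs (D1 (D1 f) x y) <= C2norm f /\ Rabs (D2 (D1 f) x y) <= C2norm f /\ Rabs (D1 (D2 f) x y) <= C2norm f /\ Rabs (D2 (D2 f) x y) <= C2norm f.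
Proof.
  intros P Hc.
  destruct Hc as (_ & _ & _ & _ & _ & _ & c0 & c1 & c2 & c11 & c21 & c12 & c22).
  destruct (cont2_bounded _ c0) as [M0 H0].
  destruct (cont2_bounded _ c1) as [M1 H1].
  destruct (cont2_bounded _ c2) as [M2 H2].
  destruct (cont2_bounded _ c11) as [M3 H3].
  destruct (cont2_bounded _ c21) as [M4 H4].
  destruct (cont2_bounded _ c12) as [M5 H5].
  destruct (cont2_bounded _ c22) as [M6 H6].
  set (M := Rabs M0 + Rabs M1 + Rabs M2 + Rabs M3 + Rabs M4 + Rabs M5 + Rabs M6).
  assert (HM : forall r, C2set f r -> r <= M).
  { intros r (x & y & Hx & Hy & Hr).
    pose proof (Rle_abs M0). pose proof (Rle_abs M1). pose proof (Rle_abs M2). pose proof (Rle_abs M3).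
    pose proof (Rle_abs M4). pose proof (Rle_abs M5). pose proof (Rle_abs M6).
    pose proof (Rabs_pos M0). pose proof (Rabs_pos M1). pose proof (Rabs_pos M2). pose proof (Rabs_pos M3).
    pose proof (Rabs_pos M4). pose proof (Rabs_pos M5). pose proof (Rabs_pos M6).
    specialize (H0 x y Hx Hy). specialize (H1 x y Hx Hy). specialize (H2 x y Hx Hy). specialize (H3 x y Hx Hy).
    specialize (H4 x y Hx Hy). specialize (H5 x y Hx Hy). specialize (H6 x y Hx Hy).
    unfold M. destruct Hr as [->|[->|[->|[->|[->|[->| ->]]]]]]; lra. }
  assert (E0 : C2set f (Rabs (f 0 0))).
  { exists 0, 0. split. lra. split. lra. left. reflexivity. }
  pose proof (lub_fin (C2set f) M _ HM E0) as L.
  assert (Cdef : C2norm f = real (Lub_Rbar (C2set f))) by reflexivity.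
  rewrite <- Cdef in L.
  assert (B : forall h, periodic1 h -> (forall x y, 0 <= x <= 1 -> 0 <= y <= 1 -> C2set f (Rabs (h x y))) ->
     forall x y, Rabs (h x y) <= C2norm f).
  { intros h Ph Hh. apply per_bound. auto. intros x y Hx Hy. apply L. auto. }
  split. { eapply Rle_trans. apply Rabs_pos. apply L. apply E0. }
  intros x y.
  repeat split; apply B; auto using per_D1, per_D2;
    intros u v Hu Hv; exists u, v; split; auto; split; auto; tauto.
Qed.

Lemma sq_sum (a : nat -> R) n : (sum_n a n) ^ 2 = sum_n (fun x => sum_n (fun y => a x * a y) n) n.
Proof. replace ((sum_n a n)^2) with (sum_n a n * sum_n a n) by ring.
  rewrite <- sR_scalr. apply sR_ext. intros. rewrite sR_scal. reflexivity. Qed.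

Lemma sR_switch (u : nat -> nat -> R) m n :
  sum_n (fun i => sum_n (fun j => u i j) n) m = sum_n (fun j => sum_n (fun i => u i j) m) n.
Proof. apply (sum_n_switch u m n). Qed.

Lemma sR_delta (c : nat -> R) x n : (x <= n)%nat ->
  sum_n (fun y => if Nat.eqb x y then c y else 0) n = c x.
Proof. intros H. induction n.
  - rewrite sR_O. replace x with 0%nat by lia. reflexivity.
  - rewrite sR_S. destruct (Nat.eq_dec x (S n)).
    + subst. rewrite Nat.eqb_refl.
      rewrite (sR_ext _ (fun _ => 0)). rewrite sR_const. lra.
      intros k Hk. destruct (Nat.eqb_spec (S n) k). lia. reflexivity.
    + rewrite IHn by lia. destruct (Nat.eqb_spec x (S n)). lia. lra.
Qed.

Lemma trig_per_sin w x y : sin (w + 2 * PI * (INR y - INR x)) = sin w.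
Proof.
  replace (w + 2 * PI * (INR y - INR x)) with ((w - 2 * PI * INR x) + 2 * INR y * PI) by ring.
  rewrite sin_period. rewrite <- (sin_period (w - 2 * PI * INR x) x). f_equal. ring. Qed.
Lemma trig_per_cos w x y : cos (w + 2 * PI * (INR y - INR x)) = cos w.
Proof.
  replace (w + 2 * PI * (INR y - INR x)) with ((w - 2 * PI * INR x) + 2 * INR y * PI) by ring.
  rewrite cos_period. rewrite <- (cos_period (w - 2 * PI * INR x) x). f_equal. ring. Qed.

Lemma tel_cos a n : 2 * sin (a / 2) * sum_n (fun m => cos (a * INR m)) n = sin (a * (INR n + 1/2)) + sin (a / 2).
Proof. induction n.
  - rewrite sR_O. simpl. rewrite Rmult_0_r, cos_0. replace (a * (0 + 1/2)) with (a/2) by field. ring.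
  - rewrite sR_S. rewrite Rmult_plus_distr_l, IHn.
    set (w := a * INR (S n)).
    replace (a * (INR n + 1 / 2)) with (w - a/2) by (unfold w; rewrite S_INR; field).
    replace (a * (INR (S n) + 1 / 2)) with (w + a/2) by (unfold w; field).
    rewrite sin_plus, sin_minus. ring.
Qed.

Lemma tel_sin a n : 2 * sin (a / 2) * sum_n (fun m => sin (a * INR m)) n = cos (a / 2) - cos (a * (INR n + 1/2)).
Proof. induction n.
  - rewrite sR_O. simpl. rewrite Rmult_0_r, sin_0. replace (a * (0 + 1/2)) with (a/2) by field. ring.
  - rewrite sR_S. rewrite Rmult_plus_distr_l, IHn.
    set (w := a * INR (S n)).
    replace (a * (INR n + 1 / 2)) with (w - a/2) by (unfold w; rewrite S_INR; field).
    replace (a * (INR (S n) + 1 / 2)) with (w + a/2) by (unfold w; field).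
    rewrite cos_plus, cos_minus. ring.
Qed.

Lemma sin_half_nz N x y : (x < N)%nat -> (y < N)%nat -> x <> y ->
  sin (2 * PI * (INR y - INR x) / INR N / 2) <> 0.
Proof.
  intros Hx Hy Hxy.
  assert (HN : 0 < INR N) by (apply lt_0_INR; lia).
  replace (2 * PI * (INR y - INR x) / INR N / 2) with (PI * ((INR y - INR x) / INR N)) by (field; lra).
  assert (Hd : Rabs (INR y - INR x) < INR N).
  { apply Rabs_lt_between'. apply lt_INR in Hx. apply lt_INR in Hy. pose proof (pos_INR x). pose proof (pos_INR y). lra. }
  pose proof PI_RGT_0.
  destruct (Nat.lt_ge_cases x y) as [L|L].
  - apply lt_INR in L. apply Rgt_not_eq. apply sin_gt_0.
    apply Rmult_lt_0_compat. lra. apply Rdiv_lt_0_compat; lra.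
    rewrite <- (Rmult_1_r PI) at 2. apply Rmult_lt_compat_l. lra.
    apply Rmult_lt_reg_r with (INR N). lra. unfold Rdiv. rewrite Rmult_assoc, Rinv_l by lra.
    rewrite Rabs_right in Hd by lra. lra.
  - assert (L' : (y < x)%nat) by lia. apply lt_INR in L'.
    replace (PI * ((INR y - INR x) / INR N)) with (- (PI * ((INR x - INR y) / INR N))) by (field; lra).
    rewrite sin_neg. apply Ropp_neq_0_compat. apply Rgt_not_eq. apply sin_gt_0.
    apply Rmult_lt_0_compat. lra. apply Rdiv_lt_0_compat; lra.
    rewrite <- (Rmult_1_r PI) at 2. apply Rmult_lt_compat_l. lra.
    apply Rmult_lt_reg_r with (INR N). lra. unfold Rdiv. rewrite Rmult_assoc, Rinv_l by lra.
    rewrite Rabs_left in Hd by lra. lra.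
Qed.

Lemma orth_cos N x y : (x < N)%nat -> (y < N)%nat ->
  sum_n (fun m => cos (2 * PI * (INR y - INR x) / INR N * INR m)) (N - 1) = if Nat.eqb x y then INR N else 0.
Proof.
  intros Hx Hy. assert (HN : 0 < INR N) by (apply lt_0_INR; lia).
  destruct (Nat.eqb_spec x y).
  - subst. rewrite (sR_ext _ (fun _ => 1)). rewrite sR_const. replace (S (N - 1)) with N by lia. lra.
    intros. replace (2 * PI * (INR y - INR y) / INR N * INR k) with 0 by (field; lra). apply cos_0.
  - set (a := 2 * PI * (INR y - INR x) / INR N).
    pose proof (tel_cos a (N - 1)) as T. pose proof (sin_half_nz N x y Hx Hy n) as Z. fold a in Z.
    replace (a * (INR (N - 1) + 1 / 2)) with (- (a / 2) + 2 * PI * (INR y - INR x)) in T.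
    rewrite trig_per_sin, sin_neg in T.
    apply Rmult_eq_reg_l with (2 * sin (a / 2)). rewrite T. ring. intro. apply Z. lra.
    rewrite minus_INR by lia. unfold a. simpl. field. lra.
Qed.

Lemma orth_sin N x y : (x < N)%nat -> (y < N)%nat ->
  sum_n (fun m => sin (2 * PI * (INR y - INR x) / INR N * INR m)) (N - 1) = 0.
Proof.
  intros Hx Hy. assert (HN : 0 < INR N) by (apply lt_0_INR; lia).
  destruct (Nat.eq_dec x y).
  - subst. rewrite (sR_ext _ (fun _ => 0)). rewrite sR_const. lra.
    intros. replace (2 * PI * (INR y - INR y) / INR N * INR k) with 0 by (field; lra). apply sin_0.
  - set (a := 2 * PI * (INR y - INR x) / INR N).
    pose proof (tel_sin a (N - 1)) as T. pose proof (sin_half_nz N x y Hx Hy n) as Z. fold a in Z.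
    replace (a * (INR (N - 1) + 1 / 2)) with (- (a / 2) + 2 * PI * (INR y - INR x)) in T.
    rewrite trig_per_cos, cos_neg in T.
    apply Rmult_eq_reg_l with (2 * sin (a / 2)). rewrite T. ring. intro. apply Z. lra.
    rewrite minus_INR by lia. unfold a. simpl. field. lra.
Qed.

Definition al (N x m : nat) : R := 2 * PI * (- (INR x * INR m)) / INR N.
Definition Dc N (p q : nat -> R) m := sum_n (fun x => cos (al N x m) * p x - sin (al N x m) * q x) (N - 1).
Definition Ds N (p q : nat -> R) m := sum_n (fun x => cos (al N x m) * q x + sin (al N x m) * p x) (N - 1).

Lemma parseval1 N p q : (0 < N)%nat ->
  sum_n (fun m => Dc N p q m ^ 2 + Ds N p q m ^ 2) (N - 1) = INR N * sum_n (fun x => p x ^ 2 + q x ^ 2) (N - 1).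
Proof.
  intros HN0. assert (HN : 0 < INR N) by (apply lt_0_INR; lia).
  set (n := (N - 1)%nat).
  set (K := fun m x y => cos (2 * PI * (INR y - INR x) / INR N * INR m) * (p x * p y + q x * q y)
                       + sin (2 * PI * (INR x - INR y) / INR N * INR m) * (q x * p y - p x * q y)).
  transitivity (sum_n (fun m => sum_n (fun x => sum_n (fun y => K m x y) n) n) n).
  { apply sR_ext. intros m _. unfold Dc, Ds. fold n. rewrite !sq_sum.
    rewrite <- sR_plus. apply sR_ext. intros x _. rewrite <- sR_plus. apply sR_ext. intros y _.
    unfold K.
    replace (2 * PI * (INR y - INR x) / INR N * INR m) with (al N x m - al N y m) by (unfold al; field; lra).
    replace (2 * PI * (INR x - INR y) / INR N * INR m) with (al N y m - al N x m) by (unfold al; field; lra).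
    rewrite cos_minus, sin_minus. ring. }
  rewrite sR_switch.
  rewrite (sR_ext _ (fun x => sum_n (fun y => sum_n (fun m => K m x y) n) n)).
  2:{ intros x _. apply sR_switch. }
  rewrite (sR_ext _ (fun x => INR N * (p x ^ 2 + q x ^ 2))).
  2:{ intros x Hx. rewrite (sR_ext _ (fun y => if Nat.eqb x y then INR N * (p y * p y + q y * q y) else 0)).
      - rewrite sR_delta by auto. ring.
      - intros y Hy. unfold K. rewrite sR_plus, sR_scalr, sR_scalr.
        rewrite orth_cos by (unfold n in *; lia). rewrite orth_sin by (unfold n in *; lia).
        destruct (Nat.eqb_spec x y). subst. ring. ring. }
  apply sR_scal.
Qed.

Lemma fst_sum (F : nat -> C) n : fst (sum_n F n) = sum_n (fun k => fst (F k)) n.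
Proof. induction n. rewrite sum_O, sR_O. reflexivity.
  rewrite sum_Sn, sR_S. rewrite <- IHn. reflexivity. Qed.
Lemma snd_sum (F : nat -> C) n : snd (sum_n F n) = sum_n (fun k => snd (F k)) n.
Proof. induction n. rewrite sum_O, sR_O. reflexivity.
  rewrite sum_Sn, sR_S. rewrite <- IHn. reflexivity. Qed.

Definition g2 N f x1 x2 := gN N f x1 x2.
Definition PP N f m2 x1 := Dc N (g2 N f x1) (fun _ => 0) m2.
Definition QQ N f m2 x1 := Ds N (g2 N f x1) (fun _ => 0) m2.

Lemma CmR_fst a z : fst (Cmult (RtoC a) z) = a * fst z.
Proof. destruct z; simpl; ring. Qed.
Lemma CmR_snd a z : snd (Cmult (RtoC a) z) = a * snd z.
Proof. destruct z; simpl; ring. Qed.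
Lemma CmR_fst' a z : fst (Cmult z (RtoC a)) = fst z * a.
Proof. destruct z; simpl; ring. Qed.
Lemma CmR_snd' a z : snd (Cmult z (RtoC a)) = snd z * a.
Proof. destruct z; simpl; ring. Qed.

Lemma ghat_fst N f m1 m2 : (0 < N)%nat ->
  fst (ghat N f m1 m2) = / INR N * Dc N (PP N f m2) (QQ N f m2) m1.
Proof.
  intros HN0. assert (HN : 0 < INR N) by (apply lt_0_INR; lia).
  unfold ghat. rewrite CmR_fst. f_equal.
  unfold sumZN. rewrite fst_sum. unfold Dc. apply sR_ext. intros x1 _.
  rewrite fst_sum. unfold PP, QQ, Dc, Ds. rewrite <- !sR_scal, <- sR_minus. apply sR_ext. intros x2 _.
  rewrite CmR_fst'. unfold chi. simpl fst. unfold g2.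
  replace (2 * PI * - (INR x1 * INR m1 + INR x2 * INR m2) / INR N) with (al N x1 m1 + al N x2 m2) by (unfold al; field; lra).
  rewrite cos_plus. ring.
Qed.

Lemma ghat_snd N f m1 m2 : (0 < N)%nat ->
  snd (ghat N f m1 m2) = / INR N * Ds N (PP N f m2) (QQ N f m2) m1.
Proof.
  intros HN0. assert (HN : 0 < INR N) by (apply lt_0_INR; lia).
  unfold ghat. rewrite CmR_snd. f_equal.
  unfold sumZN. rewrite snd_sum. unfold Ds. apply sR_ext. intros x1 _.
  rewrite snd_sum. unfold PP, QQ, Dc, Ds. rewrite <- !sR_scal, <- sR_plus. apply sR_ext. intros x2 _.
  rewrite CmR_snd'. unfold chi. simpl snd. unfold g2.
  replace (2 * PI * - (INR x1 * INR m1 + INR x2 * INR m2) / INR N) with (al N x1 m1 + al N x2 m2) by (unfold al; field; lra).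
  rewrite sin_plus. ring.
Qed.

Lemma Cmod_sq z : Cmod z ^ 2 = fst z ^ 2 + snd z ^ 2.
Proof. unfold Cmod. apply pow2_sqrt. pose proof (pow2_ge_0 (fst z)). pose proof (pow2_ge_0 (snd z)). lra. Qed.

Lemma parseval2 N f : (0 < N)%nat ->
  sumZN N (fun m1 => sumZN N (fun m2 => Cmod (ghat N f m1 m2) ^ 2)) =
  sumZN N (fun x1 => sumZN N (fun x2 => gN N f x1 x2 ^ 2)).
Proof.
  intros HN0. assert (HN : 0 < INR N) by (apply lt_0_INR; lia).
  unfold sumZN.
  rewrite (sR_ext _ (fun m1 => sum_n (fun m2 => / INR N ^ 2 * (Dc N (PP N f m2) (QQ N f m2) m1 ^ 2 + Ds N (PP N f m2) (QQ N f m2) m1 ^ 2)) (N - 1))).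
  2:{ intros m1 _. apply sR_ext. intros m2 _. rewrite Cmod_sq, ghat_fst, ghat_snd by auto. Req. field. lra. }
  rewrite sR_switch.
  rewrite (sR_ext _ (fun m2 => / INR N * sum_n (fun x1 => PP N f m2 x1 ^ 2 + QQ N f m2 x1 ^ 2) (N - 1))).
  2:{ intros m2 _. rewrite sR_scal, parseval1 by auto. Req. field. lra. }
  rewrite sR_scal, sR_switch.
  rewrite (sR_ext _ (fun x1 => INR N * sum_n (fun x2 => gN N f x1 x2 ^ 2) (N - 1))).
  2:{ intros x1 _. unfold PP, QQ. rewrite parseval1 by auto. f_equal. apply sR_ext. intros. unfold g2. ring. }
  rewrite sR_scal. Req. field. lra.
Qed.

Definition S2 (N : nat) (Phi : R -> R -> R) : R :=
  sum_n (fun x1 => sum_n (fun x2 => Phi (INR x1) (INR x2)) (N - 1)) (N - 1).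

Lemma S2_ext N A B : (forall a b, A a b = B a b) -> S2 N A = S2 N B.
Proof. intros H. unfold S2. apply sR_ext. intros. apply sR_ext. intros. apply H. Qed.
Lemma S2_plus N A B : S2 N (fun a b => A a b + B a b) = S2 N A + S2 N B.
Proof. unfold S2. rewrite <- sR_plus. apply sR_ext. intros. apply sR_plus. Qed.
Lemma S2_minus N A B : S2 N (fun a b => A a b - B a b) = S2 N A - S2 N B.
Proof. unfold S2. rewrite <- sR_minus. apply sR_ext. intros. apply sR_minus. Qed.
Lemma S2_scal N c A : S2 N (fun a b => c * A a b) = c * S2 N A.
Proof. unfold S2. rewrite <- sR_scal. apply sR_ext. intros. apply sR_scal. Qed.
Lemma S2_bound N A B : (0 < N)%nat -> (forall a b, Rabs (A a b) <= B) -> Rabs (S2 N A) <= INR N * (INR N * B).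
Proof. intros HN H. unfold S2. 
  assert (E : INR N = INR (S (N - 1))) by (f_equal; lia). rewrite E.
  apply sR_bound. intros. apply sR_bound. intros. apply H. Qed.

Lemma shift1 (H : R -> R) N : (0 < N)%nat -> (forall a, H (a + INR N) = H a) ->
  sum_n (fun x => H (INR x + 1)) (N - 1) = sum_n (fun x => H (INR x)) (N - 1).
Proof.
  intros HN Hp. pose proof (sR_shift (fun x => H (INR x)) (N - 1)) as E. cbv beta in E.
  replace (S (N - 1)) with N in E by lia.
  assert (E2 : H (INR N) = H (INR 0)) by (rewrite <- (Rplus_0_l (INR N)), Hp; reflexivity).
  rewrite (sR_ext (fun x => H (INR x + 1)) (fun x => H (INR (S x)))). lra.
  intros. rewrite S_INR. reflexivity.
Qed.

Lemma shiftm1 (H : R -> R) N : (0 < N)%nat -> (forall a, H (a + INR N) = H a) ->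
  sum_n (fun x => H (INR x - 1)) (N - 1) = sum_n (fun x => H (INR x)) (N - 1).
Proof.
  intros HN Hp. pose proof (shift1 (fun a => H (a - 1)) N HN) as E. simpl in E.
  rewrite <- E. apply sR_ext. intros. f_equal. ring.
  intros a. replace (a + INR N - 1) with ((a - 1) + INR N) by ring. apply Hp.
Qed.

Lemma S2_shift1 N Phi : (0 < N)%nat -> (forall a b, Phi (a + INR N) b = Phi a b) ->
  S2 N (fun a b => Phi (a + 1) b) = S2 N Phi.
Proof. intros HN Hp. unfold S2.
  apply (shift1 (fun a => sum_n (fun x2 => Phi a (INR x2)) (N - 1)) N HN).
  intros a. apply sR_ext. intros. apply Hp. Qed.
Lemma S2_shiftm1 N Phi : (0 < N)%nat -> (forall a b, Phi (a + INR N) b = Phi a b) ->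
  S2 N (fun a b => Phi (a - 1) b) = S2 N Phi.
Proof. intros HN Hp. unfold S2.
  apply (shiftm1 (fun a => sum_n (fun x2 => Phi a (INR x2)) (N - 1)) N HN).
  intros a. apply sR_ext. intros. apply Hp. Qed.
Lemma S2_shift2 N Phi : (0 < N)%nat -> (forall a b, Phi a (b + INR N) = Phi a b) ->
  S2 N (fun a b => Phi a (b + 1)) = S2 N Phi.
Proof. intros HN Hp. unfold S2. apply sR_ext. intros.
  apply (shift1 (fun b => Phi (INR k) b) N HN). intros. apply Hp. Qed.
Lemma S2_shiftm2 N Phi : (0 < N)%nat -> (forall a b, Phi a (b + INR N) = Phi a b) ->
  S2 N (fun a b => Phi a (b - 1)) = S2 N Phi.
Proof. intros HN Hp. unfold S2. apply sR_ext. intros.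
  apply (shiftm1 (fun b => Phi (INR k) b) N HN). intros. apply Hp. Qed.

Definition Lap (G : R -> R -> R) a b := G (a + 1) b + G (a - 1) b + G a (b + 1) + G a (b - 1) - 4 * G a b.

Lemma lap_id N (T : R -> R) (G : R -> R -> R) u v : (0 < N)%nat ->
  (forall w s, T (w - s) + T (w + s) = 2 * cos s * T w) ->
  (forall w, T (w + u * INR N) = T w) -> (forall w, T (w + v * INR N) = T w) ->
  (forall a b, G (a + INR N) b = G a b) -> (forall a b, G a (b + INR N) = G a b) ->
  S2 N (fun a b => T (u * a + v * b) * Lap G a b) = (2 * cos u + 2 * cos v - 4) * S2 N (fun a b => T (u * a + v * b) * G a b).
Proof.
  intros HN Htr Hu Hv G1 G2.
  unfold Lap.
  rewrite (S2_ext _ _ (fun a b => T (u * a + v * b) * G (a + 1) b + T (u * a + v * b) * G (a - 1) b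
     + T (u * a + v * b) * G a (b + 1) + T (u * a + v * b) * G a (b - 1) - 4 * (T (u * a + v * b) * G a b)))
    by (intros; ring).
  rewrite S2_minus, !S2_plus, S2_scal.
  assert (A1 : S2 N (fun a b => T (u * a + v * b) * G (a + 1) b) = S2 N (fun a b => T (u * (a - 1) + v * b) * G a b)).
  { rewrite <- (S2_shift1 N (fun a b => T (u * (a - 1) + v * b) * G a b)). apply S2_ext; intros a b.
    replace (a + 1 - 1) with a by ring. reflexivity. auto.
    intros a b; rewrite G1; f_equal; rewrite <- (Hu (u * (a - 1) + v * b)); f_equal; ring. }
  assert (A2 : S2 N (fun a b => T (u * a + v * b) * G (a - 1) b) = S2 N (fun a b => T (u * (a + 1) + v * b) * G a b)).
  { rewrite <- (S2_shiftm1 N (fun a b => T (u * (a + 1) + v * b) * G a b)). apply S2_ext; intros a b.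
    replace (a - 1 + 1) with a by ring. reflexivity. auto.
    intros a b; rewrite G1; f_equal; rewrite <- (Hu (u * (a + 1) + v * b)); f_equal; ring. }
  assert (A3 : S2 N (fun a b => T (u * a + v * b) * G a (b + 1)) = S2 N (fun a b => T (u * a + v * (b - 1)) * G a b)).
  { rewrite <- (S2_shift2 N (fun a b => T (u * a + v * (b - 1)) * G a b)). apply S2_ext; intros a b.
    replace (b + 1 - 1) with b by ring. reflexivity. auto.
    intros a b; rewrite G2; f_equal; rewrite <- (Hv (u * a + v * (b - 1))); f_equal; ring. }
  assert (A4 : S2 N (fun a b => T (u * a + v * b) * G a (b - 1)) = S2 N (fun a b => T (u * a + v * (b + 1)) * G a b)).
  { rewrite <- (S2_shiftm2 N (fun a b => T (u * a + v * (b + 1)) * G a b)). apply S2_ext; intros a b.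
    replace (b - 1 + 1) with b by ring. reflexivity. auto.
    intros a b; rewrite G2; f_equal; rewrite <- (Hv (u * a + v * (b + 1))); f_equal; ring. }
  rewrite A1, A2, A3, A4.
  rewrite <- S2_scal, <- !S2_plus, <- S2_minus. rewrite <- S2_scal. apply S2_ext. intros a b.
  pose proof (Htr (u * a + v * b) u) as E1. pose proof (Htr (u * a + v * b) v) as E2.
  replace (u * (a - 1) + v * b) with (u * a + v * b - u) by ring.
  replace (u * (a + 1) + v * b) with (u * a + v * b + u) by ring.
  replace (u * a + v * (b - 1)) with (u * a + v * b - v) by ring.
  replace (u * a + v * (b + 1)) with (u * a + v * b + v) by ring.
  transitivity ((T (u * a + v * b - u) + T (u * a + v * b + u) + (T (u * a + v * b - v) + T (u * a + v * b + v)) - 4 * T (u * a + v * b)) * G a b).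
  ring. rewrite E1, E2. ring.
Qed.

Definition GG N (f : R -> R -> R) a b := f (a / INR N) (b / INR N).

Lemma C2_derivs f : C2 f ->
  (forall x y, is_derive (fun t => f t y) x (D1 f x y)) /\
  (forall x y, is_derive (fun t => D1 f t y) x (D1 (D1 f) x y)) /\
  (forall x y, is_derive (fun t => f x t) y (D2 f x y)) /\
  (forall x y, is_derive (fun t => D2 f x t) y (D2 (D2 f) x y)).
Proof.
  intros (e1 & e2 & e11 & e12 & e21 & e22 & _).
  split; [|split; [|split]]; intros xx yy; apply Derive_correct; auto.
Qed.

Lemma GG_per N f : (0 < N)%nat -> periodic1 f ->
  (forall a b, GG N f (a + INR N) b = GG N f a b) /\ (forall a b, GG N f a (b + INR N) = GG N f a b).
Proof.
  intros HN P. assert (0 < INR N) by (apply lt_0_INR; lia). unfold GG. split; intros a b.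
  - replace ((a + INR N) / INR N) with (a / INR N + 1) by (field; lra). apply P.
  - replace ((b + INR N) / INR N) with (b / INR N + 1) by (field; lra). apply P.
Qed.

Lemma Lap_bound N f : (0 < N)%nat -> periodic1 f -> C2 f ->
  forall a b, Rabs (Lap (GG N f) a b) <= 4 * C2norm f / INR N ^ 2.
Proof.
  intros HN P Hc a b. assert (HN' : 0 < INR N) by (apply lt_0_INR; lia).
  destruct (C2_facts f P Hc) as [C0 B].
  destruct (C2_derivs f Hc) as (d1 & d11 & d2 & d22).
  pose proof (second_diff (fun t => f t (b / INR N)) (fun t => D1 f t (b / INR N)) (fun t => D1 (D1 f) t (b / INR N)) (C2norm f)
     (fun x => d1 x _) (fun x => d11 x _) (fun x => proj1 (proj2 (proj2 (proj2 (B x _))))) (a / INR N) (1 / INR N)) as S1.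
  pose proof (second_diff (fun t => f (a / INR N) t) (fun t => D2 f (a / INR N) t) (fun t => D2 (D2 f) (a / INR N) t) (C2norm f)
     (fun y => d2 _ y) (fun y => d22 _ y) (fun y => proj2 (proj2 (proj2 (proj2 (proj2 (proj2 (B _ y))))))) (b / INR N) (1 / INR N)) as S2.
  cbv beta in S1, S2.
  unfold Lap, GG.
  replace ((a + 1) / INR N) with (a / INR N + 1 / INR N) by (field; lra).
  replace ((a - 1) / INR N) with (a / INR N - 1 / INR N) by (field; lra).
  replace ((b + 1) / INR N) with (b / INR N + 1 / INR N) by (field; lra).
  replace ((b - 1) / INR N) with (b / INR N - 1 / INR N) by (field; lra).
  match goal with |- Rabs ?e <= _ => replace e with
    ((f (a / INR N + 1 / INR N) (b / INR N) + f (a / INR N - 1 / INR N) (b / INR N) - 2 * f (a / INR N) (b / INR N)) +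
     (f (a / INR N) (b / INR N + 1 / INR N) + f (a / INR N) (b / INR N - 1 / INR N) - 2 * f (a / INR N) (b / INR N))) by ring end.
  eapply Rle_trans. apply Rabs_triang.
  replace (4 * C2norm f / INR N ^ 2) with (2 * C2norm f * (1 / INR N) ^ 2 + 2 * C2norm f * (1 / INR N) ^ 2) by (field; lra).
  lra.
Qed.

Lemma ghat_S2 N f m1 m2 : (0 < N)%nat ->
  fst (ghat N f m1 m2) = / INR N * S2 N (fun a b => cos (- (2 * PI * INR m1 / INR N) * a + - (2 * PI * INR m2 / INR N) * b) * GG N f a b) /\
  snd (ghat N f m1 m2) = / INR N * S2 N (fun a b => sin (- (2 * PI * INR m1 / INR N) * a + - (2 * PI * INR m2 / INR N) * b) * GG N f a b).
Proof.
  intros HN0. assert (HN : 0 < INR N) by (apply lt_0_INR; lia). split.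
  - unfold ghat. rewrite CmR_fst. f_equal.
    unfold sumZN, S2. rewrite fst_sum. apply sR_ext. intros x1 _.
    rewrite fst_sum. apply sR_ext. intros x2 _.
    rewrite CmR_fst'. unfold chi. simpl fst. unfold GG, gN. f_equal. f_equal. field. lra.
  - unfold ghat. rewrite CmR_snd. f_equal.
    unfold sumZN, S2. rewrite snd_sum. apply sR_ext. intros x1 _.
    rewrite snd_sum. apply sR_ext. intros x2 _.
    rewrite CmR_snd'. unfold chi. simpl snd. unfold GG, gN. f_equal. f_equal. field. lra.
Qed.

Lemma Cmod_le_sum z : Cmod z <= Rabs (fst z) + Rabs (snd z).
Proof. unfold Cmod. rewrite <- (sqrt_pow2 (Rabs (fst z) + Rabs (snd z))).
  apply sqrt_le_1_alt. rewrite <- (pow2_abs (fst z)), <- (pow2_abs (snd z)).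
  pose proof (Rabs_pos (fst z)). pose proof (Rabs_pos (snd z)). nra.
  pose proof (Rabs_pos (fst z)). pose proof (Rabs_pos (snd z)). lra. Qed.

Lemma ST_bound N f (T : R -> R) u v : (0 < N)%nat -> periodic1 f -> C2 f ->
  (forall w s, T (w - s) + T (w + s) = 2 * cos s * T w) ->
  (forall w, T (w + u * INR N) = T w) -> (forall w, T (w + v * INR N) = T w) ->
  (forall w, Rabs (T w) <= 1) ->
  (4 - 2 * cos u - 2 * cos v) * Rabs (S2 N (fun a b => T (u * a + v * b) * GG N f a b)) <= 4 * C2norm f.
Proof.
  intros HN0 P Hc Htr Hu Hv HT. assert (HN : 0 < INR N) by (apply lt_0_INR; lia).
  destruct (GG_per N f HN0 P) as [G1 G2].
  pose proof (lap_id N T (GG N f) u v HN0 Htr Hu Hv G1 G2) as E.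
  assert (Hl : 0 <= 4 - 2 * cos u - 2 * cos v) by (pose proof (COS_bound u); pose proof (COS_bound v); lra).
  rewrite <- (Rabs_right (4 - 2 * cos u - 2 * cos v)) by lra. rewrite <- Rabs_mult.
  replace ((4 - 2 * cos u - 2 * cos v) * S2 N (fun a b => T (u * a + v * b) * GG N f a b))
    with (- S2 N (fun a b => T (u * a + v * b) * Lap (GG N f) a b)) by (rewrite E; ring).
  rewrite Rabs_Ropp.
  eapply Rle_trans. apply S2_bound with (B := 4 * C2norm f / INR N ^ 2). auto.
  intros a b. rewrite Rabs_mult. rewrite <- (Rmult_1_l (4 * C2norm f / INR N ^ 2)).
  apply Rmult_le_compat. apply Rabs_pos. apply Rabs_pos. apply HT. apply Lap_bound; auto.
  right. field. lra.
Qed.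

Lemma cos_tr w s : cos (w - s) + cos (w + s) = 2 * cos s * cos w.
Proof. rewrite cos_minus, cos_plus. ring. Qed.
Lemma sin_tr w s : sin (w - s) + sin (w + s) = 2 * cos s * sin w.
Proof. rewrite sin_minus, sin_plus. ring. Qed.

Lemma cos_abs1 w : Rabs (cos w) <= 1.
Proof. apply Rabs_le. apply COS_bound. Qed.
Lemma sin_abs1 w : Rabs (sin w) <= 1.
Proof. apply Rabs_le. apply SIN_bound. Qed.

Lemma decay N f m1 m2 : (0 < N)%nat -> periodic1 f -> C2 f ->
  (4 - 2 * cos (- (2 * PI * INR m1 / INR N)) - 2 * cos (- (2 * PI * INR m2 / INR N))) * Cmod (ghat N f m1 m2)
  <= 8 * C2norm f / INR N.
Proof.
  intros HN0 P Hc. assert (HN : 0 < INR N) by (apply lt_0_INR; lia).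
  set (u := - (2 * PI * INR m1 / INR N)). set (v := - (2 * PI * INR m2 / INR N)).
  destruct (ghat_S2 N f m1 m2 HN0) as [Ef Es]. fold u v in Ef, Es.
  assert (Pu : forall w, w + u * INR N = w + 2 * PI * (INR 0 - INR m1)) by (intros; unfold u; simpl; field; lra).
  assert (Pv : forall w, w + v * INR N = w + 2 * PI * (INR 0 - INR m2)) by (intros; unfold v; simpl; field; lra).
  pose proof (ST_bound N f cos u v HN0 P Hc cos_tr (fun w => eq_trans (f_equal cos (Pu w)) (trig_per_cos w m1 0))
     (fun w => eq_trans (f_equal cos (Pv w)) (trig_per_cos w m2 0)) cos_abs1) as Bc.
  pose proof (ST_bound N f sin u v HN0 P Hc sin_tr (fun w => eq_trans (f_equal sin (Pu w)) (trig_per_sin w m1 0))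
     (fun w => eq_trans (f_equal sin (Pv w)) (trig_per_sin w m2 0)) sin_abs1) as Bs.
  assert (Hl : 0 <= 4 - 2 * cos u - 2 * cos v) by (pose proof (COS_bound u); pose proof (COS_bound v); lra).
  eapply Rle_trans. apply Rmult_le_compat_l. exact Hl. apply Cmod_le_sum.
  rewrite Ef, Es, !Rabs_mult, Rabs_right by (apply Rle_ge, Rlt_le, Rinv_0_lt_compat; lra).
  apply Rle_trans with (/ INR N * (4 * C2norm f) + / INR N * (4 * C2norm f)).
  2: right; field; lra.
  assert (0 < / INR N) by (apply Rinv_0_lt_compat; lra). nra.
Qed.

Definition Fk (a b : nat) : R := if (Nat.eqb a 0 && Nat.eqb b 0)%bool then 0 else / (INR a ^ 2 + INR b ^ 2).

Lemma Fk_pos a b : 0 <= Fk a b.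
Proof. unfold Fk. destruct (Nat.eqb_spec a 0), (Nat.eqb_spec b 0); simpl; try lra;
  apply Rlt_le, Rinv_0_lt_compat.
  - assert (0 < INR b) by (apply lt_0_INR; lia). nra.
  - assert (0 < INR a) by (apply lt_0_INR; lia). nra.
  - assert (0 < INR a) by (apply lt_0_INR; lia). nra.
Qed.

Lemma Fk_le a b : (a <> 0 \/ b <> 0)%nat -> Fk a b <= 4 / ((INR a + INR b) * (INR a + INR b + 1)).
Proof. intros H. unfold Fk.
  assert (Hs : 1 <= INR a + INR b).
  { destruct H. assert (1 <= INR a) by (apply (le_INR 1); lia). pose proof (pos_INR b). lra.
    assert (1 <= INR b) by (apply (le_INR 1); lia). pose proof (pos_INR a). lra. }
  assert (Hq : 0 < INR a ^ 2 + INR b ^ 2).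
  { destruct H. assert (1 <= INR a) by (apply (le_INR 1); lia). pose proof (pos_INR b). nra.
    assert (1 <= INR b) by (apply (le_INR 1); lia). pose proof (pos_INR a). nra. }
  destruct (Nat.eqb_spec a 0), (Nat.eqb_spec b 0); cbv [andb]; try lia.
  all: replace (/ (INR a ^ 2 + INR b ^ 2)) with (4 / (4 * (INR a ^ 2 + INR b ^ 2))) by (field; lra);
    unfold Rdiv; apply Rmult_le_compat_l; [lra|]; apply Rinv_le_contravar; [nra|];
    pose proof (pos_INR a); pose proof (pos_INR b);
    assert ((INR a + INR b) * (INR a + INR b + 1) <= 2 * (INR a + INR b)^2) by nra;
    assert ((INR a + INR b)^2 <= 2 * (INR a ^2 + INR b^2)) by (pose proof (pow2_ge_0 (INR a - INR b)); nra); lra.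
Qed.

Lemma tele (A : R) n : 0 < A ->
  sum_n (fun b => 4 / ((A + INR b) * (A + INR b + 1))) n = 4 / A - 4 / (A + INR n + 1).
Proof. intros HA. induction n.
  - rewrite sR_O. simpl. Req. field. lra.
  - rewrite sR_S, IHn. rewrite S_INR. pose proof (pos_INR n). Req. field. lra.
Qed.

Lemma row_pos a N : (1 <= a)%nat -> sum_n (fun b => Fk a b) N <= 4 / INR a.
Proof. intros Ha. assert (HA : 0 < INR a) by (apply lt_0_INR; lia).
  eapply Rle_trans. apply sR_le with (b := fun b => 4 / ((INR a + INR b) * (INR a + INR b + 1))).
  intros. apply Fk_le. lia. rewrite tele by auto.
  pose proof (pos_INR N). assert (0 < 4 / (INR a + INR N + 1)) by (apply Rdiv_lt_0_compat; lra). lra.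
Qed.

Lemma row_0 N : (1 <= N)%nat -> sum_n (fun b => Fk 0 b) N <= 4.
Proof. intros HN. replace N with (S (N - 1)) by lia. rewrite sR_Sl.
  replace (Fk 0 0) with 0 by reflexivity.
  eapply Rle_trans. apply Rplus_le_compat_l.
  apply sR_le with (b := fun b => 4 / ((1 + INR b) * (1 + INR b + 1))).
  intros k _. eapply Rle_trans. apply Fk_le. lia. rewrite S_INR. simpl INR. right. f_equal. ring.
  rewrite tele by lra. pose proof (pos_INR (N - 1)).
  assert (0 < 4 / (1 + INR (N - 1) + 1)) by (apply Rdiv_lt_0_compat; lra).
  replace (4 / 1) with 4 by field. lra.
Qed.

Lemma ln_step x : 0 < x -> / (x + 1) <= ln (x + 1) - ln x.
Proof. intros Hx.
  pose proof (exp_ineq1_le (ln (x / (x + 1)))) as E. rewrite exp_ln in E by (apply Rdiv_lt_0_compat; lra).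
  rewrite ln_div in E by lra.
  assert (x / (x + 1) = 1 - / (x + 1)) by (field; lra). lra.
Qed.

Lemma harm n : sum_n (fun a => / (INR a + 1)) n <= 1 + ln (INR n + 1).
Proof. induction n.
  - rewrite sR_O. simpl. rewrite Rplus_0_l, ln_1. lra.
  - rewrite sR_S. rewrite S_INR. pose proof (pos_INR n).
    pose proof (ln_step (INR n + 1)). lra.
Qed.

Lemma grid_bound N : (1 <= N)%nat ->
  sum_n (fun a => sum_n (fun b => Fk a b) N) N <= 8 + 4 * ln (INR N).
Proof. intros HN. replace N with (S (N - 1)) at 1 by lia. rewrite sR_Sl.
  pose proof (row_0 N HN).
  assert (sum_n (fun a => sum_n (fun b => Fk (S a) b) N) (N - 1) <= 4 * sum_n (fun a => / (INR a + 1)) (N - 1)).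
  { rewrite <- sR_scal. apply sR_le. intros k _. eapply Rle_trans. apply row_pos. lia. rewrite S_INR. right. field.
    pose proof (pos_INR k). lra. }
  pose proof (harm (N - 1)). rewrite minus_INR in H1 by lia. simpl INR in H1. replace (INR N - 1 + 1) with (INR N) in H1 by ring.
  lra.
Qed.

Definition good N (s : nat -> nat) := forall F : nat -> R, (forall k, 0 <= F k) ->
  sum_n (fun m => F (s m)) (N - 1) <= sum_n F N.

Lemma good_id N : (1 <= N)%nat -> good N (fun m => m).
Proof. intros HN F HF. destruct N as [|n]. lia. replace (S n - 1)%nat with n by lia. rewrite sR_S. specialize (HF (S n)). change (fun m => F m) with F. lra. Qed.

Lemma good_rev N : (1 <= N)%nat -> good N (fun m => N - m)%nat.
Proof. intros HN F HF. rewrite <- (sR_rev F N). apply (good_id N HN (fun x => F (N - x)%nat)). auto. Qed.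

Lemma dbl N s1 s2 : good N s1 -> good N s2 ->
  sum_n (fun m1 => sum_n (fun m2 => Fk (s1 m1) (s2 m2)) (N - 1)) (N - 1) <= sum_n (fun a => sum_n (fun b => Fk a b) N) N.
Proof. intros H1 H2.
  eapply Rle_trans. apply sR_le with (b := fun m1 => sum_n (fun b => Fk (s1 m1) b) N).
  intros k _. apply (H2 (fun b => Fk (s1 k) b)). intros; apply Fk_pos.
  apply (H1 (fun a => sum_n (fun b => Fk a b) N)). intros. apply sR_nonneg. intros; apply Fk_pos.
Qed.

Definition Kf N m := Nat.min m (N - m).

Lemma refl2 N : (1 <= N)%nat ->
  sum_n (fun m1 => sum_n (fun m2 => Fk (Kf N m1) (Kf N m2)) (N - 1)) (N - 1) <= 4 * sum_n (fun a => sum_n (fun b => Fk a b) N) N.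
Proof. intros HN.
  pose proof (dbl N _ _ (good_id N HN) (good_id N HN)) as A1.
  pose proof (dbl N _ _ (good_rev N HN) (good_id N HN)) as A2.
  pose proof (dbl N _ _ (good_id N HN) (good_rev N HN)) as A3.
  pose proof (dbl N _ _ (good_rev N HN) (good_rev N HN)) as A4.
  cbv beta in A1, A2, A3, A4.
  eapply Rle_trans. apply sR_le. intros m1 _. apply sR_le. intros m2 _.
  instantiate (1 := fun m2 => Fk m1 m2 + Fk (N - m1) m2 + Fk m1 (N - m2) + Fk (N - m1) (N - m2)). cbv beta.
  - pose proof (Fk_pos m1 m2). pose proof (Fk_pos (N - m1) m2). pose proof (Fk_pos m1 (N - m2)). pose proof (Fk_pos (N - m1) (N - m2)).
    unfold Kf. destruct (Nat.min_spec m1 (N - m1)) as [[_ E1]|[_ E1]]; destruct (Nat.min_spec m2 (N - m2)) as [[_ E2]|[_ E2]];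
    rewrite E1, E2; lra.
  - rewrite (sR_ext _ (fun m1 => sum_n (fun m2 => Fk m1 m2) (N - 1) + sum_n (fun m2 => Fk (N - m1) m2) (N - 1)
        + sum_n (fun m2 => Fk m1 (N - m2)) (N - 1) + sum_n (fun m2 => Fk (N - m1) (N - m2)) (N - 1))).
    rewrite !sR_plus. lra.
    intros. rewrite !sR_plus. reflexivity.
Qed.

Lemma PI_ub : PI <= 3.35.
Proof. destruct (PI_ineq 2) as [_ H]. unfold tg_alt, PI_tg in H. simpl in H. lra. Qed.
Lemma PI_lb : 3 < PI.
Proof. pose proof PI2_3_2. lra. Qed.
Lemma sin_half t : 0 <= t -> t <= PI / 2 -> t / 2 <= sin t.
Proof. intros H1 H2. pose proof PI_ub. destruct (SIN t H1 ltac:(lra)) as [Hs _].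
  assert (E : sin_lb t = t - t^3/6 + t^5/120 - t^7/5040).
  { unfold sin_lb, sin_approx, sin_term. simpl. field. }
  rewrite E in Hs.
  assert (t <= 1.7) by lra. 
  assert (0 <= t^2) by nra. assert (t^2 <= 2.89) by nra.
  assert (0 <= t^5 * (42 - t^2)). { apply Rmult_le_pos. apply pow_le; lra. lra. }
  assert (t^3 <= 3 * t). { replace (t^3) with (t * t^2) by ring. nra. }
  nra.
Qed.

Lemma lam1 N m : (m < N)%nat ->
  PI ^ 2 * INR (Kf N m) ^ 2 / INR N ^ 2 <= 2 - 2 * cos (- (2 * PI * INR m / INR N)).
Proof.
  intros Hm. assert (HN : 0 < INR N) by (apply lt_0_INR; lia).
  rewrite cos_neg. replace (2 * PI * INR m / INR N) with (2 * (PI * INR m / INR N)) by (field; lra).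
  rewrite cos_2a_sin.
  assert (Es : sin (PI * INR m / INR N) = sin (PI * INR (Kf N m) / INR N)).
  { unfold Kf. destruct (Nat.min_spec m (N - m)) as [[_ E]|[_ E]]; rewrite E. reflexivity.
    rewrite minus_INR by lia. rewrite <- sin_PI_x. f_equal. field. lra. }
  rewrite Es.
  assert (Hk : 2 * INR (Kf N m) <= INR N).
  { assert (HH : (2 * Kf N m <= N)%nat) by (unfold Kf; lia). apply le_INR in HH. rewrite mult_INR in HH.
    replace (INR 2) with 2 in HH by (simpl; ring). exact HH. }
  set (t := PI * INR (Kf N m) / INR N).
  assert (Ht0 : 0 <= t) by (unfold t; pose proof (pos_INR (Kf N m)); pose proof PI_RGT_0; apply Rmult_le_pos; [nra| apply Rlt_le, Rinv_0_lt_compat; lra]).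
  assert (Ht1 : t <= PI / 2).
  { unfold t. pose proof PI_RGT_0. apply Rmult_le_reg_r with (2 * INR N). lra.
    replace (PI * INR (Kf N m) / INR N * (2 * INR N)) with (PI * (2 * INR (Kf N m))) by (field; lra).
    replace (PI / 2 * (2 * INR N)) with (PI * INR N) by field. nra. }
  pose proof (sin_half t Ht0 Ht1).
  replace (PI ^ 2 * INR (Kf N m) ^ 2 / INR N ^ 2) with (t ^ 2) by (unfold t; field; lra).
  nra.
Qed.

Lemma Kf_pos N m : (m < N)%nat -> m <> 0%nat -> Kf N m <> 0%nat.
Proof. intros. unfold Kf. lia. Qed.

Lemma pt_bound N f m1 m2 : (0 < N)%nat -> periodic1 f -> C2 f -> (m1 < N)%nat -> (m2 < N)%nat ->
  (m1 <> 0 \/ m2 <> 0)%nat ->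
  Cmod (ghat N f m1 m2) <= 8 * C2norm f * INR N / PI ^ 2 * Fk (Kf N m1) (Kf N m2).
Proof.
  intros HN0 P Hc H1 H2 Hm. assert (HN : 0 < INR N) by (apply lt_0_INR; lia).
  pose proof (decay N f m1 m2 HN0 P Hc) as D.
  pose proof (lam1 N m1 H1) as L1. pose proof (lam1 N m2 H2) as L2.
  destruct (C2_facts f P Hc) as [C0 _].
  set (k1 := Kf N m1) in *. set (k2 := Kf N m2) in *.
  assert (Hs : 0 < INR k1 ^ 2 + INR k2 ^ 2).
  { destruct Hm as [Hm|Hm].
    - assert (k1 <> 0%nat) by (apply Kf_pos; auto). assert (0 < INR k1) by (apply lt_0_INR; lia).
      pose proof (pow2_ge_0 (INR k2)). nra.
    - assert (k2 <> 0%nat) by (apply Kf_pos; auto). assert (0 < INR k2) by (apply lt_0_INR; lia).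
      pose proof (pow2_ge_0 (INR k1)). nra. }
  assert (EF : Fk k1 k2 = / (INR k1 ^ 2 + INR k2 ^ 2)).
  { unfold Fk. destruct (Nat.eqb_spec k1 0), (Nat.eqb_spec k2 0); cbv [andb]; try reflexivity.
    rewrite e, e0 in Hs. simpl in Hs. lra. }
  rewrite EF.
  set (lam := 4 - 2 * cos (- (2 * PI * INR m1 / INR N)) - 2 * cos (- (2 * PI * INR m2 / INR N))) in *.
  assert (Hl : PI ^ 2 * (INR k1 ^ 2 + INR k2 ^ 2) / INR N ^ 2 <= lam).
  { unfold lam. replace (PI ^ 2 * (INR k1 ^ 2 + INR k2 ^ 2) / INR N ^ 2) with
      (PI ^ 2 * INR k1 ^ 2 / INR N ^ 2 + PI ^ 2 * INR k2 ^ 2 / INR N ^ 2) by (field; lra). lra. }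
  pose proof PI_RGT_0.
  assert (Hl0 : 0 < PI ^ 2 * (INR k1 ^ 2 + INR k2 ^ 2) / INR N ^ 2).
  { apply Rdiv_lt_0_compat. apply Rmult_lt_0_compat. nra. lra. nra. }
  pose proof (Cmod_ge_0 (ghat N f m1 m2)).
  assert (X : PI ^ 2 * (INR k1 ^ 2 + INR k2 ^ 2) / INR N ^ 2 * Cmod (ghat N f m1 m2) <= 8 * C2norm f / INR N).
  { eapply Rle_trans. 2: exact D. apply Rmult_le_compat_r; lra. }
  apply Rmult_le_reg_l with (PI ^ 2 * (INR k1 ^ 2 + INR k2 ^ 2) / INR N ^ 2). exact Hl0.
  eapply Rle_trans. exact X. right. field. split; nra.
Qed.

Lemma l1_bound N f : (1 <= N)%nat -> periodic1 f -> C2 f ->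
  ghat_l1 N f <= Cmod (ghat N f 0 0) + 8 * C2norm f * INR N / PI ^ 2 * (4 * (8 + 4 * ln (INR N))).
Proof.
  intros HN P Hc. assert (HN' : 0 < INR N) by (apply lt_0_INR; lia).
  destruct (C2_facts f P Hc) as [C0 _]. pose proof PI_RGT_0.
  set (B := 8 * C2norm f * INR N / PI ^ 2).
  assert (HB : 0 <= B) by (unfold B; apply Rmult_le_pos; [nra | apply Rlt_le, Rinv_0_lt_compat; nra]).
  set (c := Cmod (ghat N f 0 0)).
  unfold ghat_l1, sumZN.
  eapply Rle_trans. apply sR_le. intros m1 Hm1. apply sR_le. intros m2 Hm2.
  instantiate (1 := fun m2 => (if Nat.eqb 0 m1 then (if Nat.eqb 0 m2 then c else 0) else 0) + B * Fk (Kf N m1) (Kf N m2)).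
  cbv beta.
  - pose proof (Fk_pos (Kf N m1) (Kf N m2)).
    destruct (Nat.eqb_spec 0 m1), (Nat.eqb_spec 0 m2).
    + subst. unfold c. nra.
    + rewrite Rplus_0_l. apply pt_bound; auto; lia.
    + rewrite Rplus_0_l. apply pt_bound; auto; lia.
    + rewrite Rplus_0_l. apply pt_bound; auto; lia.
  - rewrite (sR_ext _ (fun m1 => (if Nat.eqb 0 m1 then c else 0) + B * sum_n (fun m2 => Fk (Kf N m1) (Kf N m2)) (N - 1))).
    2:{ intros m1 _. rewrite sR_plus, sR_scal. f_equal. destruct (Nat.eqb_spec 0 m1).
        apply (sR_delta (fun _ => c)). lia. rewrite sR_const. lra. }
    rewrite sR_plus, sR_scal. rewrite (sR_delta (fun _ => c)) by lia.
    pose proof (refl2 N HN). pose proof (grid_bound N HN).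
    apply Rplus_le_compat_l. apply Rmult_le_compat_l. auto. lra.
Qed.

Lemma lim_arg x y K : 0 <= K -> (forall M : nat, (1 <= M)%nat -> x <= y + K / INR M) -> x <= y.
Proof.
  intros HK H. apply Rnot_lt_le. intro Hc.
  destruct (archimed_cor1 ((x - y) / (K + 1))) as [M [HM HM0]].
  apply Rdiv_lt_0_compat; lra.
  specialize (H M ltac:(lia)). assert (0 < INR M) by (apply lt_0_INR; lia).
  assert (K / INR M <= K * ((x - y) / (K + 1))).
  { unfold Rdiv at 1. apply Rmult_le_compat_l. auto. lra. }
  assert (K * ((x - y) / (K + 1)) < x - y).
  { apply Rlt_le_trans with ((K + 1) * ((x - y) / (K + 1))).
    apply Rmult_lt_compat_r. apply Rdiv_lt_0_compat; lra. lra. right. field. lra. }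
  lra.
Qed.

Lemma cs1 (a : nat -> R) n : (sum_n a n) ^ 2 <= INR (S n) * sum_n (fun k => a k ^ 2) n.
Proof.
  set (m := sum_n a n / INR (S n)).
  assert (HS : 0 < INR (S n)) by (apply lt_0_INR; lia).
  assert (H0 : 0 <= sum_n (fun k => (a k - m) ^ 2) n) by (apply sR_nonneg; intros; apply pow2_ge_0).
  rewrite (sR_ext _ (fun k => a k ^ 2 - (2 * m) * a k + m ^ 2)) in H0 by (intros; ring).
  rewrite sR_plus, sR_minus, sR_scal, sR_const in H0.
  unfold m in H0.
  assert (E : INR (S n) * (sum_n (fun k => a k ^ 2) n - 2 * (sum_n a n / INR (S n)) * sum_n a n + INR (S n) * (sum_n a n / INR (S n)) ^ 2)
    = INR (S n) * sum_n (fun k => a k ^ 2) n - (sum_n a n) ^ 2) by (field; lra).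
  assert (0 <= INR (S n) * (sum_n (fun k => a k ^ 2) n - 2 * (sum_n a n / INR (S n)) * sum_n a n + INR (S n) * (sum_n a n / INR (S n)) ^ 2)).
  { apply Rmult_le_pos; lra. }
  lra.
Qed.

Lemma cs2 (a : nat -> nat -> R) n :
  (sum_n (fun i => sum_n (fun j => a i j) n) n) ^ 2 <= INR (S n) * (INR (S n) * sum_n (fun i => sum_n (fun j => a i j ^ 2) n) n).
Proof.
  eapply Rle_trans. apply cs1. apply Rmult_le_compat_l. apply pos_INR.
  rewrite <- sR_scal. apply sR_le. intros. apply cs1.
Qed.

Lemma f_lip1 f : periodic1 f -> C2 f -> forall y, lipf (fun x => f x y) (C2norm f).
Proof. intros P Hc y s t. destruct (C2_derivs f Hc) as (d1 & _ & _ & _). destruct (C2_facts f P Hc) as [_ B].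
  apply (lip_glob (fun x => f x y) (fun x => D1 f x y)). intros; apply d1. intros; apply B. Qed.
Lemma f_lip2 f : periodic1 f -> C2 f -> forall x, lipf (fun y => f x y) (C2norm f).
Proof. intros P Hc x s t. destruct (C2_derivs f Hc) as (_ & _ & d2 & _). destruct (C2_facts f P Hc) as [_ B].
  apply (lip_glob (fun y => f x y) (fun y => D2 f x y)). intros; apply d2. intros; apply B. Qed.

Lemma sq_lip (phi : R -> R) K C : 0 <= C -> (forall s, Rabs (phi s) <= C) -> lipf phi K ->
  lipf (fun s => phi s ^ 2) (2 * C * K).
Proof. intros HC Hb H s t. replace (phi s ^ 2 - phi t ^ 2) with ((phi s + phi t) * (phi s - phi t)) by ring.
  rewrite Rabs_mult. rewrite Rmult_assoc. apply Rmult_le_compat. apply Rabs_pos. apply Rabs_pos.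
  eapply Rle_trans. apply Rabs_triang. pose proof (Hb s). pose proof (Hb t). lra. apply H. Qed.

Lemma riem_f N f : (1 <= N)%nat -> periodic1 f -> C2 f ->
  Rabs (int2 f - sum_n (fun i => sum_n (fun j => f (INR i / INR N) (INR j / INR N)) (N - 1)) (N - 1) / INR N ^ 2)
  <= 2 * C2norm f / INR N.
Proof. intros HN P Hc. destruct (C2_facts f P Hc) as [C0 _].
  replace (2 * C2norm f) with (C2norm f + C2norm f) by ring.
  apply (riem2 f); auto. apply f_lip1; auto. apply f_lip2; auto. Qed.

Lemma riem_f2 N f : (1 <= N)%nat -> periodic1 f -> C2 f ->
  Rabs (int2 (fun x y => f x y ^ 2) - sum_n (fun i => sum_n (fun j => f (INR i / INR N) (INR j / INR N) ^ 2) (N - 1)) (N - 1) / INR N ^ 2)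
  <= 4 * C2norm f ^ 2 / INR N.
Proof. intros HN P Hc. destruct (C2_facts f P Hc) as [C0 B].
  replace (4 * C2norm f ^ 2) with (2 * C2norm f * C2norm f + 2 * C2norm f * C2norm f) by ring.
  apply (riem2 (fun x y => f x y ^ 2)); auto; try nra.
  intros y. apply sq_lip. auto. intros; apply B. apply f_lip1; auto.
  intros x. apply sq_lip. auto. intros; apply B. apply f_lip2; auto. Qed.

Lemma lnN x : 2 <= x -> / 2 < ln x.
Proof. intros H. pose proof ln_lt_2. destruct (Req_dec x 2). subst. auto.
  pose proof (ln_increasing 2 x ltac:(lra) ltac:(lra)). lra. Qed.

Lemma g00_bound N f : (1 <= N)%nat -> periodic1 f -> C2 f ->
  Cmod (ghat N f 0 0) <= INR N * Rabs (int2 f) + 2 * C2norm f.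
Proof.
  intros HN P Hc. assert (HN' : 0 < INR N) by (apply lt_0_INR; lia).
  destruct (ghat_S2 N f 0 0 ltac:(lia)) as [Ef Es].
  set (S := sum_n (fun i => sum_n (fun j => f (INR i / INR N) (INR j / INR N)) (N - 1)) (N - 1)).
  assert (E1 : S2 N (fun a b => cos (- (2 * PI * INR 0 / INR N) * a + - (2 * PI * INR 0 / INR N) * b) * GG N f a b) = S).
  { rewrite (S2_ext _ _ (GG N f)). reflexivity. intros a b. simpl INR.
    replace (- (2 * PI * 0 / INR N) * a + - (2 * PI * 0 / INR N) * b) with 0 by (field; lra). rewrite cos_0. ring. }
  assert (E2 : S2 N (fun a b => sin (- (2 * PI * INR 0 / INR N) * a + - (2 * PI * INR 0 / INR N) * b) * GG N f a b) = 0).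
  { rewrite (S2_ext _ _ (fun a b => 0 * GG N f a b)). rewrite S2_scal. ring. intros a b. simpl INR.
    replace (- (2 * PI * 0 / INR N) * a + - (2 * PI * 0 / INR N) * b) with 0 by (field; lra). rewrite sin_0. ring. }
  rewrite E1 in Ef. rewrite E2 in Es.
  eapply Rle_trans. apply Cmod_le_sum. rewrite Ef, Es, Rmult_0_r, Rabs_R0, Rplus_0_r.
  pose proof (riem_f N f HN P Hc) as R. fold S in R.
  rewrite Rabs_mult, Rabs_right by (apply Rle_ge, Rlt_le, Rinv_0_lt_compat; lra).
  assert (Rabs (S / INR N ^ 2) <= Rabs (int2 f) + 2 * C2norm f / INR N).
  { pose proof (Rabs_triang_inv (S / INR N ^ 2) (int2 f)). rewrite Rabs_minus_sym in R. lra. }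
  rewrite Rabs_div in H by (apply pow_nonzero; lra). rewrite (Rabs_right (INR N ^ 2)) in H by (apply Rle_ge, pow_le; lra).
  apply Rmult_le_reg_l with (INR N). auto.
  replace (INR N * (/ INR N * Rabs S)) with (Rabs S) by (field; lra).
  replace (INR N * (INR N * Rabs (int2 f) + 2 * C2norm f)) with (INR N ^ 2 * (Rabs (int2 f) + 2 * C2norm f / INR N)) by (field; lra).
  apply Rmult_le_reg_r with (/ INR N ^ 2). apply Rinv_0_lt_compat, pow_lt; lra.
  replace (INR N ^ 2 * (Rabs (int2 f) + 2 * C2norm f / INR N) * / INR N ^ 2) with (Rabs (int2 f) + 2 * C2norm f / INR N) by (field; lra).
  exact H.
Qed.

Lemma L_pos f N : periodic1 f -> C2 f -> (exists x y, f x y <> 0) ->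
  INR N * (L2norm f) ^ 2 >= 8 * (C2norm f) ^ 2 -> 0 < L2norm f /\ L2norm f ^ 2 = int2 (fun x y => f x y ^ 2).
Proof.
  intros P Hc [x0 [y0 Hf]] H.
  destruct (C2_facts f P Hc) as [C0 B].
  assert (Hp : 0 < L2norm f).
  { destruct (Rle_lt_or_eq_dec 0 (L2norm f) (sqrt_pos _)) as [h|h]. auto.
    exfalso. rewrite <- h in H. assert (C2norm f = 0) by nra.
    destruct (B x0 y0) as [B0 _]. rewrite H0 in B0. pose proof (Rabs_pos (f x0 y0)).
    apply Hf. apply Rabs_eq_0. lra. }
  split. auto. unfold L2norm in *.
  destruct (Rle_lt_dec (int2 (fun x y => f x y ^ 2)) 0) as [h|h].
  rewrite sqrt_neg_0 in Hp by auto. lra.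
  apply pow2_sqrt. lra.
Qed.

Lemma partA f N : periodic1 f -> C2 f -> (exists x y, f x y <> 0) -> (2 <= N)%nat ->
  INR N * (L2norm f) ^ 2 >= 8 * (C2norm f) ^ 2 ->
  FR N f <= 2 * Rabs (int2 f) / L2norm f
            + 16 * PI ^ 2 * (C2norm f / L2norm f) * ln (INR N)
            + 8 * PI ^ 2 / L2norm f * (C2norm f / INR N).
Proof.
  intros P Hc Hne HN2 H.
  assert (HN1 : (1 <= N)%nat) by lia.
  assert (HN : 2 <= INR N) by (apply (le_INR 2) in HN2; simpl in HN2; lra).
  destruct (L_pos f N P Hc Hne H) as [Lp LI].
  destruct (C2_facts f P Hc) as [C0 _].
  set (L := L2norm f) in *. set (C := C2norm f) in *. set (mu := int2 f).
  set (ell := ln (INR N)).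
  assert (Hell : / 2 < ell) by (apply lnN; auto).
  set (Q := sum_n (fun i => sum_n (fun j => f (INR i / INR N) (INR j / INR N) ^ 2) (N - 1)) (N - 1)).
  assert (EQ : ghat_l2 N f = sqrt Q).
  { unfold ghat_l2. f_equal. rewrite parseval2 by lia. reflexivity. }
  pose proof (riem_f2 N f HN1 P Hc) as R2. fold Q in R2. rewrite <- LI in R2. fold C in R2.
  assert (HQ : (INR N * L / 2) ^ 2 <= Q).
  { assert (4 * C ^ 2 / INR N <= L ^ 2 / 2).
    { apply Rmult_le_reg_r with (2 * INR N). lra.
      replace (4 * C ^ 2 / INR N * (2 * INR N)) with (8 * C ^ 2) by (field; lra). lra. }
    assert (L ^ 2 / 4 <= Q / INR N ^ 2).
    { pose proof (Rabs_triang_inv (L ^ 2) (Q / INR N ^ 2)). pose proof (pow2_ge_0 L).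
      assert (L^2 - Q / INR N ^ 2 <= L ^ 2 / 2) by (pose proof (Rle_abs (L ^ 2 - Q / INR N ^ 2)); match goal with H: _ |- _ => idtac end; lra). lra. }
    replace ((INR N * L / 2) ^ 2) with (INR N ^ 2 * (L ^ 2 / 4)) by field.
    replace Q with (INR N ^ 2 * (Q / INR N ^ 2)) by (field; lra).
    apply Rmult_le_compat_l. apply pow_le; lra. auto. }
  assert (Hl2 : INR N * L / 2 <= ghat_l2 N f).
  { rewrite EQ. rewrite <- (sqrt_pow2 (INR N * L / 2)) by nra. apply sqrt_le_1_alt. auto. }
  pose proof (l1_bound N f HN1 P Hc) as Hl1. fold C in Hl1. fold ell in Hl1.
  pose proof (g00_bound N f HN1 P Hc) as Hg. fold C mu in Hg.
  set (A := INR N * Rabs mu + 2 * C + 8 * C * INR N / PI ^ 2 * (4 * (8 + 4 * ell))).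
  assert (HA : ghat_l1 N f <= A) by (unfold A; lra).
  assert (Hl1p : 0 <= ghat_l1 N f).
  { unfold ghat_l1, sumZN. apply sR_nonneg. intros. apply sR_nonneg. intros. apply Cmod_ge_0. }
  assert (HNL : 0 < INR N * L / 2) by nra.
  assert (FR N f <= A / (INR N * L / 2)).
  { unfold FR. apply Rle_trans with (A / ghat_l2 N f).
    apply Rmult_le_compat_r. apply Rlt_le, Rinv_0_lt_compat; lra. auto.
    apply Rmult_le_compat_l. lra. apply Rinv_le_contravar; auto. }
  eapply Rle_trans. exact H0.
  pose proof PI_lb as Hpi.
  assert (HP2 : 9 <= PI ^ 2) by nra.
  set (X := C / L). set (Y := C / (INR N * L)).
  assert (HX : 0 <= X) by (unfold X; apply Rmult_le_pos; [lra | apply Rlt_le, Rinv_0_lt_compat; lra]).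
  assert (HY : 0 <= Y) by (unfold Y; apply Rmult_le_pos; [lra | apply Rlt_le, Rinv_0_lt_compat; nra]).
  replace (A / (INR N * L / 2)) with (2 * Rabs mu / L + 4 * Y + 16 * X * (32 + 16 * ell) / PI ^ 2)
    by (unfold A, X, Y; field; split; lra).
  replace (16 * PI ^ 2 * (C / L) * ell) with (16 * PI ^ 2 * X * ell) by reflexivity.
  replace (8 * PI ^ 2 / L * (C / INR N)) with (8 * PI ^ 2 * Y) by (unfold Y; field; split; lra).
  assert (16 * X * (32 + 16 * ell) / PI ^ 2 <= 16 * PI ^ 2 * X * ell).
  { apply Rmult_le_reg_r with (PI ^ 2). lra.
    replace (16 * X * (32 + 16 * ell) / PI ^ 2 * PI ^ 2) with (16 * X * (32 + 16 * ell)) by (field; lra).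
    assert (H81 : 81 <= PI ^ 2 * PI ^ 2) by nra.
    assert (0 <= (PI ^ 2 * PI ^ 2 - 81) * ell) by (apply Rmult_le_pos; lra).
    assert (32 + 16 * ell <= PI ^ 2 * PI ^ 2 * ell) by nra.
    replace (16 * PI ^ 2 * X * ell * PI ^ 2) with ((16 * X) * (PI ^ 2 * PI ^ 2 * ell)) by ring.
    apply Rmult_le_compat_l. lra. auto. }
  assert (4 * Y <= 8 * PI ^ 2 * Y) by nra.
  lra.
Qed.

Lemma mu_sq f : periodic1 f -> C2 f -> int2 f ^ 2 <= int2 (fun x y => f x y ^ 2).
Proof.
  intros P Hc. destruct (C2_facts f P Hc) as [C0 B].
  set (C := C2norm f) in *. set (mu := int2 f). set (I := int2 (fun x y => f x y ^ 2)).
  apply (lim_arg _ _ (12 * C ^ 2)). nra.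
  intros M HM. assert (HM' : 1 <= INR M) by (apply (le_INR 1) in HM; simpl in HM; lra).
  pose proof (riem_f M f HM P Hc) as R1. pose proof (riem_f2 M f HM P Hc) as R2. fold C mu in R1. fold C I in R2.
  set (T1 := sum_n (fun i => sum_n (fun j => f (INR i / INR M) (INR j / INR M)) (M - 1)) (M - 1)) in *.
  set (T2 := sum_n (fun i => sum_n (fun j => f (INR i / INR M) (INR j / INR M) ^ 2) (M - 1)) (M - 1)) in *.
  assert (EM : INR (S (M - 1)) = INR M) by (f_equal; lia).
  assert (CS : T1 ^ 2 <= INR M * (INR M * T2)).
  { pose proof (cs2 (fun i j => f (INR i / INR M) (INR j / INR M)) (M - 1)) as X. rewrite EM in X. exact X. }
  assert (BT : Rabs T1 <= INR M * (INR M * C)).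
  { assert (X : Rabs T1 <= INR (S (M - 1)) * (INR (S (M - 1)) * C)).
    { apply sR_bound. intros. apply sR_bound. intros. apply B. }
    rewrite EM in X. exact X. }
  set (S1 := T1 / INR M ^ 2) in *. set (S2 := T2 / INR M ^ 2) in *.
  assert (HS : S1 ^ 2 <= S2).
  { unfold S1, S2. replace ((T1 / INR M ^ 2) ^ 2) with (T1 ^ 2 / INR M ^ 4) by (field; lra).
    apply Rmult_le_reg_r with (INR M ^ 4). apply pow_lt; lra.
    replace (T1 ^ 2 / INR M ^ 4 * INR M ^ 4) with (T1 ^ 2) by (field; lra).
    replace (T2 / INR M ^ 2 * INR M ^ 4) with (INR M * (INR M * T2)) by (field; lra). auto. }
  assert (HB : Rabs S1 <= C).
  { unfold S1. rewrite Rabs_div by (apply pow_nonzero; lra). rewrite (Rabs_right (INR M ^ 2)) by (apply Rle_ge, pow_le; lra).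
    apply Rmult_le_reg_r with (INR M ^ 2). apply pow_lt; lra.
    replace (Rabs T1 / INR M ^ 2 * INR M ^ 2) with (Rabs T1) by (field; lra).
    replace (C * INR M ^ 2) with (INR M * (INR M * C)) by ring. auto. }
  assert (Hmu : Rabs mu <= Rabs S1 + 2 * C / INR M).
  { pose proof (Rabs_triang_inv mu S1). lra. }
  assert (He : 0 <= 2 * C / INR M) by (apply Rmult_le_pos; [lra | apply Rlt_le, Rinv_0_lt_compat; lra]).
  assert (Hsq : mu ^ 2 <= (Rabs S1 + 2 * C / INR M) ^ 2).
  { rewrite <- (pow2_abs mu). pose proof (Rabs_pos mu). apply pow_incr. lra. }
  assert (E1 : (Rabs S1 + 2 * C / INR M) ^ 2 = S1 ^ 2 + 4 * C * Rabs S1 / INR M + 4 * C ^ 2 / INR M ^ 2).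
  { rewrite <- (pow2_abs S1). field. lra. }
  assert (E2 : 4 * C * Rabs S1 / INR M <= 4 * C ^ 2 / INR M).
  { unfold Rdiv. apply Rmult_le_compat_r. apply Rlt_le, Rinv_0_lt_compat; lra. nra. }
  assert (E3 : 4 * C ^ 2 / INR M ^ 2 <= 4 * C ^ 2 / INR M).
  { unfold Rdiv. apply Rmult_le_compat_l. nra. apply Rinv_le_contravar. lra. nra. }
  assert (E4 : S2 <= I + 4 * C ^ 2 / INR M).
  { pose proof (Rle_abs (S2 - I)). rewrite Rabs_minus_sym in R2. fold S2 in R2. lra. }
  assert (E5 : 12 * C ^ 2 / INR M = 4 * C ^ 2 / INR M + 4 * C ^ 2 / INR M + 4 * C ^ 2 / INR M) by (field; lra).
  lra.
Qed.

Theorem proposition1p6 (f : R -> R -> R) (N : nat) :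
  periodic1 f ->
  C2 f ->
  (exists x y, f x y <> 0) ->
  (2 <= N)%nat ->
  INR N * (L2norm f) ^ 2 >= 8 * (C2norm f) ^ 2 ->
  FR N f <= 2 * Rabs (int2 f) / L2norm f
            + 16 * PI ^ 2 * (C2norm f / L2norm f) * ln (INR N)
            + 8 * PI ^ 2 / L2norm f * (C2norm f / INR N)
  /\
  ((forall x y, 0 <= f x y) -> 0 < int2 f ->
   FR N f <= 2 + 16 * PI ^ 2 * (C2norm f / int2 f) * ln (INR N)
             + 8 * PI ^ 2 / int2 f * (C2norm f / INR N)).
Proof.
  intros P Hc Hne HN2 H. split.
  - apply partA; auto.
  - intros Hpos Hmu.
    pose proof (partA f N P Hc Hne HN2 H) as A.
    destruct (L_pos f N P Hc Hne H) as [Lp LI].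
    pose proof (mu_sq f P Hc) as Hsq. rewrite <- LI in Hsq.
    destruct (C2_facts f P Hc) as [C0 _].
    assert (HN : 2 <= INR N) by (apply (le_INR 2) in HN2; simpl in HN2; lra).
    assert (Hell : / 2 < ln (INR N)) by (apply lnN; auto).
    set (L := L2norm f) in *. set (C := C2norm f) in *. set (mu := int2 f) in *.
    assert (HmL : mu <= L) by nra.
    assert (I1 : / L <= / mu) by (apply Rinv_le_contravar; auto).
    assert (T1 : 2 * Rabs mu / L <= 2).
    { rewrite Rabs_right by lra. apply Rmult_le_reg_r with L. auto.
      replace (2 * mu / L * L) with (2 * mu) by (field; lra). lra. }
    assert (T2 : 16 * PI ^ 2 * (C / L) * ln (INR N) <= 16 * PI ^ 2 * (C / mu) * ln (INR N)).
    { apply Rmult_le_compat_r. lra. apply Rmult_le_compat_l. pose proof PI_RGT_0. nra.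
      apply Rmult_le_compat_l; auto. }
    assert (T3 : 8 * PI ^ 2 / L * (C / INR N) <= 8 * PI ^ 2 / mu * (C / INR N)).
    { apply Rmult_le_compat_r. apply Rmult_le_pos. auto. apply Rlt_le, Rinv_0_lt_compat; lra.
      apply Rmult_le_compat_l. pose proof PI_RGT_0. nra. auto. }
    lra.
Qed.
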